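(* Let $G$ be a group with $\mathfrak{F}\mathrm{cd}\, G = n < \infty$. Then there is an $\mathfrak{F}$-split exact sequence of $\mathbb{Z}G$-modules $0 \to P_n \to P_{n-1} \to \cdots \to P_0 \to \mathbb{Z} \to 0$ in which each $P_i$ is a permutation module $\mathbb{Z}[\Omega_i]$ on a $G$-set $\Omega_i$ all of whose point stabilisers are finite.
   Context: $\mathfrak{F}$ denotes the class of finite groups. For a group $G$, let $\Delta = \bigsqcup_{K \le G,\ K \text{ finite}} G/K$. A short exact sequence of $\mathbb{Z}G$-modules is $\mathfrak{F}$-split if it splits upon restriction to every finite subgroup of $G$ (equivalently, after tensoring with $\mathbb{Z}\Delta$ over $\mathbb{Z}$); a long exact sequence is $\mathfrak{F}$-split if all its associated short exact sequences are. A $\mathbb{Z}G$-module is $\mathfrak{F}$-projective if it is a direct summand of $N \otimes_{\mathbb{Z}} \mathbb{Z}\Delta$ for some $\mathbb{Z}G$-module $N$. The $\mathfrak{F}$-projective dimension $\mathfrak{F}\mathrm{pd}\, M$ of a $\mathbb{Z}G$-module $M$ is the minimal $n$ such that there is an $\mathfrak{F}$-split exact sequence $0\to P_n\to\cdots\to P_0\to M\to 0$ with all $P_i$ $\mathfrak{F}$-projective ($\infty$ if none exists). The $\mathfrak{F}$-cohomological dimension is $\mathfrak{F}\mathrm{cd}\, G = \mathfrak{F}\mathrm{pd}\,\mathbb{Z}$ (trivial module). *)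

(* Defs.v *)
From Stdlib Require Import List ZArith Lia Classical FunctionalExtensionality
  PropExtensionality ProofIrrelevance.
Import ListNotations.

Record Grp := {
  gcar :> Type;
  gmul : gcar -> gcar -> gcar;
  gone : gcar;
  ginv : gcar -> gcar;
  gmulA : forall x y z, gmul x (gmul y z) = gmul (gmul x y) z;
  gmul1l : forall x, gmul gone x = x;
  gmul1r : forall x, gmul x gone = x;
  gmulVl : forall x, gmul (ginv x) x = gone;
  gmulVr : forall x, gmul x (ginv x) = gone }.
Arguments gmul {G} : rename.
Arguments gone {G} : rename.
Arguments ginv {G} : rename.

Lemma ginv1 (G : Grp) : ginv (@gone G) = gone.
Proof. rewrite <- (gmul1l G (ginv gone)). apply gmulVr. Qed.

Lemma gKl (G : Grp) (g y : G) : gmul (ginv g) (gmul g y) = y.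
Proof. rewrite gmulA, gmulVl, gmul1l. reflexivity. Qed.

Lemma gKr (G : Grp) (g y : G) : gmul g (gmul (ginv g) y) = y.
Proof. rewrite gmulA, gmulVr, gmul1l. reflexivity. Qed.

Lemma ginvM (G : Grp) (g h : G) : ginv (gmul g h) = gmul (ginv h) (ginv g).
Proof.
  rewrite <- (gmul1r G (ginv (gmul g h))).
  assert (E : gmul (gmul g h) (gmul (ginv h) (ginv g)) = gone).
  { rewrite <- gmulA, gKr. apply gmulVr. }
  rewrite <- E, gmulA, gmulVl, gmul1l. reflexivity.
Qed.

Definition fin_subgroup (G : Grp) (K : G -> Prop) : Prop :=
  K gone /\ (forall x y, K x -> K y -> K (gmul x y)) /\
  (forall x, K x -> K (ginv x)) /\
  exists l : list G, forall x, K x -> In x l.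

Record ZGmod (G : Grp) := {
  mcar :> Type;
  madd : mcar -> mcar -> mcar;
  mzero : mcar;
  mopp : mcar -> mcar;
  maddA : forall x y z, madd x (madd y z) = madd (madd x y) z;
  maddC : forall x y, madd x y = madd y x;
  madd0 : forall x, madd x mzero = x;
  maddN : forall x, madd x (mopp x) = mzero;
  mact : gcar G -> mcar -> mcar;
  mactD : forall g x y, mact g (madd x y) = madd (mact g x) (mact g y);
  mact1 : forall x, mact gone x = x;
  mactM : forall g h x, mact (gmul g h) x = mact g (mact h x) }.
Arguments mcar {G} M : rename.
Arguments madd {G M} : rename.
Arguments mzero {G M} : rename.
Arguments mopp {G M} : rename.
Arguments mact {G M} : rename.

Lemma mopp0 (G : Grp) (M : ZGmod G) : mopp (@mzero G M) = mzero.
Proof. rewrite <- (madd0 G M (mopp mzero)), maddC. apply maddN. Qed.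

Lemma mact0 (G : Grp) (M : ZGmod G) (g : G) : mact g (@mzero G M) = mzero.
Proof.
  assert (E : mact g (@mzero G M) = madd (mact g mzero) (mact g mzero)).
  { rewrite <- mactD, madd0. reflexivity. }
  set (a := mact g (@mzero G M)) in *.
  transitivity (madd a (madd a (mopp a))).
  - rewrite maddN, madd0. reflexivity.
  - rewrite maddA, <- E. apply maddN.
Qed.

Definition trivZ (G : Grp) : ZGmod G.
Proof.
  refine {| mcar := Z; madd := Z.add; mzero := 0%Z; mopp := Z.opp;
            mact := fun _ x => x |}; intros; (reflexivity || lia).
Defined.

Record GSet (G : Grp) := {
  scar :> Type;
  sact : gcar G -> scar -> scar;
  sact1 : forall w, sact gone w = w;
  sactM : forall g h w, sact (gmul g h) w = sact g (sact h w) }.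
Arguments scar {G} O : rename.
Arguments sact {G O} : rename.

Definition finite_stabilisers (G : Grp) (O : GSet G) : Prop :=
  forall w : O, exists l : list G, forall g, sact g w = w -> In g l.

Lemma sig_eq' (A : Type) (P : A -> Prop) (a b : {x : A | P x}) :
  proj1_sig a = proj1_sig b -> a = b.
Proof.
  destruct a as [a pa], b as [b pb]; simpl; intros E; subst.
  f_equal; apply proof_irrelevance.
Qed.

(* Delta = disjoint union over finite subgroups K of the coset spaces G/K.
   A point is a pair (K, S) with K a finite subgroup and S a left coset gK
   (as a subset of G); G acts by left translation on S. *)
Definition is_lcoset (G : Grp) (K S : G -> Prop) : Prop :=
  exists g, forall x, S x <-> exists k, K k /\ x = gmul g k.

Definition Delta_car (G : Grp) : Type :=
  {p : (G -> Prop) * (G -> Prop) | fin_subgroup G (fst p) /\ is_lcoset G (fst p) (snd p)}.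

Lemma Delta_act_pf (G : Grp) (g : G) (p : Delta_car G) :
  let q := (fst (proj1_sig p), fun x => snd (proj1_sig p) (gmul (ginv g) x)) in
  fin_subgroup G (fst q) /\ is_lcoset G (fst q) (snd q).
Proof.
  destruct p as [[K S] [HK [g0 Hc]]]; simpl. split; [exact HK|].
  exists (gmul g g0). intros x. rewrite Hc. split.
  - intros [k [Kk E]]. exists k. split; [exact Kk|].
    rewrite <- gmulA, <- E, gKr. reflexivity.
  - intros [k [Kk E]]. exists k. split; [exact Kk|].
    rewrite E, <- gmulA, gKl. reflexivity.
Qed.

Definition Delta_act (G : Grp) (g : G) (p : Delta_car G) : Delta_car G :=
  exist _ _ (Delta_act_pf G g p).

Definition Delta (G : Grp) : GSet G.
Proof.
  refine {| scar := Delta_car G; sact := Delta_act G |}.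
  - intros [[K S] pf]. apply sig_eq'; simpl. f_equal.
    apply functional_extensionality; intros x. rewrite ginv1, gmul1l. reflexivity.
  - intros g h [[K S] pf]. apply sig_eq'; simpl. f_equal.
    apply functional_extensionality; intros x. rewrite ginvM, gmulA. reflexivity.
Defined.

(* ---------- N (x)_Z Z[Omega] with the diagonal action ----------
   Since Z[Omega] is free abelian on Omega, N (x)_Z Z[Omega] is (canonically)
   the module of finitely supported functions Omega -> N, with
   (g.f)(w) = g.(f(g^-1 w)).  For N = Z (trivial) this is the permutation
   module Z[Omega]. *)
Definition finsupp (G : Grp) (M : ZGmod G) (O : GSet G) (f : O -> M) : Prop :=
  exists l : list O, forall w, f w <> mzero -> In w l.

Definition FS (G : Grp) (M : ZGmod G) (O : GSet G) : Type :=
  {f : O -> M | finsupp G M O f}.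

Lemma fs_add_pf (G : Grp) (M : ZGmod G) (O : GSet G) (f g : FS G M O) :
  finsupp G M O (fun w => madd (proj1_sig f w) (proj1_sig g w)).
Proof.
  destruct f as [f [l1 H1]], g as [g [l2 H2]]; simpl.
  exists (l1 ++ l2). intros w Hw. apply in_or_app.
  destruct (classic (f w = mzero)) as [E|E].
  - right. apply H2. intros E'. apply Hw. rewrite E, E'. apply madd0.
  - left. apply H1. exact E.
Qed.

Lemma fs_zero_pf (G : Grp) (M : ZGmod G) (O : GSet G) : finsupp G M O (fun _ => mzero).
Proof. exists nil. intros w H. exfalso. apply H. reflexivity. Qed.

Lemma fs_opp_pf (G : Grp) (M : ZGmod G) (O : GSet G) (f : FS G M O) :
  finsupp G M O (fun w => mopp (proj1_sig f w)).
Proof.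
  destruct f as [f [l H]]; simpl. exists l. intros w Hw. apply H.
  intros E. apply Hw. rewrite E. apply mopp0.
Qed.

Lemma fs_act_pf (G : Grp) (M : ZGmod G) (O : GSet G) (g : gcar G) (f : FS G M O) :
  finsupp G M O (fun w => mact g (proj1_sig f (sact (ginv g) w))).
Proof.
  destruct f as [f [l H]]; simpl. exists (map (sact g) l). intros w Hw.
  replace w with (sact g (sact (ginv g) w)).
  - apply in_map. apply H. intros E. apply Hw. rewrite E. apply mact0.
  - rewrite <- sactM, gmulVr. apply sact1.
Qed.

Definition tens (G : Grp) (M : ZGmod G) (O : GSet G) : ZGmod G.
Proof.
  refine {| mcar := FS G M O;
            madd := fun f g => exist _ _ (fs_add_pf G M O f g);
            mzero := exist _ _ (fs_zero_pf G M O);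
            mopp := fun f => exist _ _ (fs_opp_pf G M O f);
            mact := fun g f => exist _ _ (fs_act_pf G M O g f) |};
  intros; apply sig_eq'; simpl; apply functional_extensionality; intros w.
  - apply maddA.
  - apply maddC.
  - apply madd0.
  - apply maddN.
  - apply mactD.
  - rewrite ginv1, sact1. apply mact1.
  - rewrite ginvM, sactM. apply mactM.
Defined.

Definition perm_mod (G : Grp) (O : GSet G) : ZGmod G := tens G (trivZ G) O.

Definition is_hom (G : Grp) (M N : ZGmod G) (f : M -> N) : Prop :=
  (forall x y, f (madd x y) = madd (f x) (f y)) /\
  (forall g x, f (mact g x) = mact g (f x)).

(* kernel of the i-th map of the augmented complex  ... -> P_1 -> P_0 -> M *)
Definition in_ker (G : Grp) (M : ZGmod G) (P : nat -> ZGmod G)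
  (d : forall i, P (S i) -> P i) (eps : P 0 -> M) (i : nat) : P i -> Prop :=
  match i as i0 return P i0 -> Prop with
  | 0 => fun x => eps x = mzero
  | S j => fun x => d j x = mzero
  end.

Definition exact_resolution (G : Grp) (M : ZGmod G) (n : nat)
  (P : nat -> ZGmod G) (d : forall i, P (S i) -> P i) (eps : P 0 -> M) : Prop :=
  is_hom G (P 0) M eps /\
  (forall j, j < n -> is_hom G (P (S j)) (P j) (d j)) /\
  (forall m : M, exists x : P 0, eps x = m) /\
  (0 < n -> forall y : P 1, eps (d 0 y) = mzero) /\
  (forall j, S (S j) <= n -> forall y : P (S (S j)), d j (d (S j) y) = mzero) /\
  (forall i, i < n -> forall x : P i, in_ker G M P d eps i x ->
       exists y : P (S i), d i y = x) /\
  (forall x : P n, in_ker G M P d eps n x -> x = mzero).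

(* F-split: every associated short exact sequence
   0 -> ker(P_i -> P_{i-1}) -> P_i -> im(P_i -> P_{i-1}) -> 0  (P_{-1} = M)
   splits on restriction to every finite subgroup H, i.e. the kernel is a
   ZH-direct summand: there is a ZH-linear retraction of P_i onto it. *)
Definition F_split (G : Grp) (M : ZGmod G) (n : nat)
  (P : nat -> ZGmod G) (d : forall i, P (S i) -> P i) (eps : P 0 -> M) : Prop :=
  forall i, i <= n -> forall H : G -> Prop, fin_subgroup G H ->
    exists r : P i -> P i,
      (forall x y, r (madd x y) = madd (r x) (r y)) /\
      (forall h x, H h -> r (mact h x) = mact h (r x)) /\
      (forall x, in_ker G M P d eps i (r x)) /\
      (forall x, in_ker G M P d eps i x -> r x = x).

Definition F_projective (G : Grp) (Q : ZGmod G) : Prop :=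
  exists (N : ZGmod G) (s : Q -> tens G N (Delta G)) (p : tens G N (Delta G) -> Q),
    is_hom G Q (tens G N (Delta G)) s /\ is_hom G (tens G N (Delta G)) Q p /\
    forall x, p (s x) = x.

Definition Fpd_le (G : Grp) (M : ZGmod G) (n : nat) : Prop :=
  exists (P : nat -> ZGmod G) (d : forall i, P (S i) -> P i) (eps : P 0 -> M),
    exact_resolution G M n P d eps /\ F_split G M n P d eps /\
    forall i, i <= n -> F_projective G (P i).

Definition Fpd_eq (G : Grp) (M : ZGmod G) (n : nat) : Prop :=
  Fpd_le G M n /\ forall m, m < n -> ~ Fpd_le G M m.

Definition Fcd_eq (G : Grp) (n : nat) : Prop := Fpd_eq G (trivZ G) n.

(* Main.v *)
Require Import Defs.
From Stdlib Require Import List ZArith Lia Classical FunctionalExtensionality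
  PropExtensionality ProofIrrelevance ClassicalEpsilon.
Import ListNotations.

Lemma ginvK (G : Grp) (g : G) : ginv (ginv g) = g.
Proof.
  rewrite <- (gmul1r G (ginv (ginv g))). rewrite <- (gmulVl G g).
  rewrite gmulA, gmulVl, gmul1l. reflexivity.
Qed.

Lemma gmul_cancel_l (G : Grp) (g x y : G) : gmul g x = gmul g y -> x = y.
Proof. intros E. rewrite <- (gKl G g x), <- (gKl G g y), E. reflexivity. Qed.

Definition msub {G} {M : ZGmod G} (x y : M) : M := madd x (mopp y).

Lemma madd0l G (M : ZGmod G) (x : M) : madd mzero x = x.
Proof. rewrite maddC. apply madd0. Qed.
Lemma maddNl G (M : ZGmod G) (x : M) : madd (mopp x) x = mzero.
Proof. rewrite maddC. apply maddN. Qed.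
Lemma madd_cancel_l G (M : ZGmod G) (a x y : M) : madd a x = madd a y -> x = y.
Proof.
  intros E. rewrite <- (madd0l G M x), <- (madd0l G M y), <- (maddNl G M a),
  <- !maddA, E. reflexivity.
Qed.
Lemma mopp_unique G (M : ZGmod G) (x y : M) : madd x y = mzero -> y = mopp x.
Proof. intros E. apply (madd_cancel_l G M x). rewrite E, maddN. reflexivity. Qed.
Lemma moppK G (M : ZGmod G) (x : M) : mopp (mopp x) = x.
Proof. symmetry. apply mopp_unique. apply maddNl. Qed.
Lemma mopp_add G (M : ZGmod G) (x y : M) : mopp (madd x y) = madd (mopp x) (mopp y).
Proof.
  symmetry. apply mopp_unique.
  rewrite (maddC _ _ (mopp x)), maddA, <- (maddA _ _ x), maddN, madd0, maddN. reflexivity.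
Qed.
Lemma msub_eq0 G (M : ZGmod G) (x y : M) : msub x y = mzero -> x = y.
Proof.
  unfold msub. intros E. rewrite <- (moppK G M y). apply mopp_unique. rewrite maddC. exact E.
Qed.
Lemma msubxx G (M : ZGmod G) (x : M) : msub x x = mzero.
Proof. apply maddN. Qed.
Lemma mact_opp G (M : ZGmod G) g (x : M) : mact g (mopp x) = mopp (mact g x).
Proof. apply mopp_unique. rewrite <- mactD, maddN. apply mact0. Qed.
Lemma mactK G (M : ZGmod G) g (x : M) : mact (ginv g) (mact g x) = x.
Proof. rewrite <- mactM, gmulVl. apply mact1. Qed.
Lemma mactKV G (M : ZGmod G) g (x : M) : mact g (mact (ginv g) x) = x.
Proof. rewrite <- mactM, gmulVr. apply mact1. Qed.
Lemma mact_inj G (M : ZGmod G) g (x y : M) : mact g x = mact g y -> x = y.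
Proof. intros E. rewrite <- (mactK G M g x), E, mactK. reflexivity. Qed.
Lemma sactK G (O : GSet G) g (w : O) : sact (ginv g) (sact g w) = w.
Proof. rewrite <- sactM, gmulVl. apply sact1. Qed.
Lemma sactKV G (O : GSet G) g (w : O) : sact g (sact (ginv g) w) = w.
Proof. rewrite <- sactM, gmulVr. apply sact1. Qed.

Definition additive {G} {M N : ZGmod G} (f : M -> N) :=
  forall x y, f (madd x y) = madd (f x) (f y).
Lemma add0 G (M N : ZGmod G) (f : M -> N) : additive f -> f mzero = mzero.
Proof.
  intros H. apply (madd_cancel_l G N (f mzero)). rewrite <- H, !madd0. reflexivity.
Qed.
Lemma addN G (M N : ZGmod G) (f : M -> N) : additive f -> forall x, f (mopp x) = mopp (f x).
Proof. intros H x. apply mopp_unique. rewrite <- H, maddN. apply add0; auto. Qed.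
Lemma addB G (M N : ZGmod G) (f : M -> N) : additive f -> forall x y, f (msub x y) = msub (f x) (f y).
Proof. intros H x y. unfold msub. rewrite H, addN; auto. Qed.

Definition eqd {T : Type} (x y : T) : {x = y} + {x <> y} := excluded_middle_informative (x = y).

Fixpoint lsum {G} {M : ZGmod G} {T : Type} (l : list T) (h : T -> M) : M :=
  match l with
  | [] => mzero
  | a :: l' => madd (h a) (lsum l' h)
  end.

Lemma lsum_app G (M : ZGmod G) T (l1 l2 : list T) (h : T -> M) :
  lsum (l1 ++ l2) h = madd (lsum l1 h) (lsum l2 h).
Proof.
  induction l1; simpl. rewrite madd0l; auto. rewrite IHl1, maddA. auto.
Qed.

Lemma lsum_ext G (M : ZGmod G) T (l : list T) (h1 h2 : T -> M) :
  (forall w, In w l -> h1 w = h2 w) -> lsum l h1 = lsum l h2.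
Proof.
  induction l; simpl; intros H; auto. rewrite H, IHl; auto.
Qed.

Lemma lsum_zero G (M : ZGmod G) T (l : list T) (h : T -> M) :
  (forall w, In w l -> h w = mzero) -> lsum l h = mzero.
Proof.
  induction l; simpl; intros H; auto. rewrite H, IHl, madd0; auto.
Qed.

Lemma lsum_add G (M : ZGmod G) T (l : list T) (h1 h2 : T -> M) :
  lsum l (fun w => madd (h1 w) (h2 w)) = madd (lsum l h1) (lsum l h2).
Proof.
  induction l; simpl. rewrite madd0; auto.
  rewrite IHl. rewrite <- !maddA. f_equal. rewrite !maddA. f_equal. apply maddC.
Qed.

Lemma lsum_map G (M N : ZGmod G) T (l : list T) (h : T -> M) (f : M -> N) :
  additive f -> f (lsum l h) = lsum l (fun w => f (h w)).
Proof.
  intros Hf. induction l; simpl. apply add0; auto. rewrite Hf, IHl; auto.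
Qed.

Lemma lsum_mact G (M : ZGmod G) T (l : list T) (h : T -> M) g :
  mact g (lsum l h) = lsum l (fun w => mact g (h w)).
Proof.
  induction l; simpl. apply mact0. rewrite mactD, IHl; auto.
Qed.

Lemma lsum_list_map G (M : ZGmod G) T U (l : list T) (f : T -> U) (h : U -> M) :
  lsum (map f l) h = lsum l (fun w => h (f w)).
Proof. induction l; simpl; auto. rewrite IHl; auto. Qed.

Lemma lsum_indep G (M : ZGmod G) T (l1 : list T) : forall (l2 : list T) (h : T -> M),
  NoDup l1 -> NoDup l2 ->
  (forall w, h w <> mzero -> In w l1) -> (forall w, h w <> mzero -> In w l2) ->
  lsum l1 h = lsum l2 h.
Proof.
  induction l1 as [|a l1 IH]; intros l2 h N1 N2 C1 C2.
  - simpl. symmetry. apply lsum_zero. intros w _.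
    destruct (classic (h w = mzero)) as [E|E]; auto. destruct (C1 w E).
  - inversion N1 as [|a' l1' Na N1']; subst. simpl.
    set (h' := fun w => if eqd w a then mzero else h w).
    assert (E1 : lsum l1 h = lsum l1 h').
    { apply lsum_ext. intros w Hw. unfold h'. destruct (eqd w a); subst; auto. contradiction. }
    destruct (in_dec (fun x y => eqd x y) a l2) as [Ia|Ia].
    + destruct (in_split a l2 Ia) as [u [v Euv]]. subst l2.
      apply NoDup_remove in N2. destruct N2 as [N2 Nav].
      rewrite lsum_app. simpl.
      assert (E2 : lsum (u ++ v) h = lsum (u ++ v) h').
      { apply lsum_ext. intros w Hw. unfold h'. destruct (eqd w a); subst; auto. contradiction. }
      rewrite E1, (IH (u ++ v) h' N1' N2).
      * rewrite <- E2, lsum_app. rewrite !maddA. f_equal. apply maddC.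
      * intros w Hw. unfold h' in Hw. destruct (eqd w a); [contradiction|].
        destruct (C1 w Hw); [congruence|auto].
      * intros w Hw. unfold h' in Hw. destruct (eqd w a); [contradiction|].
        specialize (C2 w Hw). apply in_app_or in C2. apply in_or_app.
        destruct C2 as [C|[C|C]]; auto. congruence.
    + assert (Ha : h a = mzero).
      { destruct (classic (h a = mzero)); auto. exfalso. apply Ia. apply C2; auto. }
      rewrite Ha, madd0l. apply IH; auto.
      intros w Hw. destruct (C1 w Hw); auto. subst. contradiction.
Qed.

Lemma nodup_cover T (l : list T) : exists l', NoDup l' /\ forall x, In x l <-> In x l'.
Proof.
  exists (nodup (fun x y => eqd x y) l). split. apply NoDup_nodup.
  intros x. symmetry. apply nodup_In.
Qed.
Lemma tens_ext G (M : ZGmod G) (O : GSet G) (f g : tens G M O) :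
  (forall w, proj1_sig f w = proj1_sig g w) -> f = g.
Proof. intros H. apply sig_eq'. apply functional_extensionality. exact H. Qed.

Definition tval {G} {M : ZGmod G} {O : GSet G} (f : tens G M O) : O -> M := proj1_sig f.

Lemma tval_add G (M : ZGmod G) (O : GSet G) (f g : tens G M O) w : tval (madd f g) w = madd (tval f w) (tval g w).
Proof. reflexivity. Qed.
Lemma tval_zero G (M : ZGmod G) (O : GSet G) w : tval (@mzero G (tens G M O)) w = mzero.
Proof. reflexivity. Qed.
Lemma tval_opp G (M : ZGmod G) (O : GSet G) (f : tens G M O) w : tval (mopp f) w = mopp (tval f w).
Proof. reflexivity. Qed.
Lemma tval_act G (M : ZGmod G) (O : GSet G) (f : tens G M O) g w : tval (mact g f) w = mact g (tval f (sact (ginv g) w)).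
Proof. reflexivity. Qed.

Lemma delta_pf G (M : ZGmod G) (O : GSet G) (w : O) (n : M) :
  finsupp G M O (fun u => if eqd u w then n else mzero).
Proof. exists [w]. intros u H. destruct (eqd u w); [left; auto | contradiction]. Qed.

Definition delta {G} {M : ZGmod G} {O : GSet G} (w : O) (n : M) : tens G M O :=
  exist _ _ (delta_pf G M O w n).

Lemma tval_delta G (M : ZGmod G) (O : GSet G) (w : O) (n : M) u : tval (@delta G M O w n) u = if eqd u w then n else mzero.
Proof. reflexivity. Qed.

Lemma delta_add G (M : ZGmod G) (O : GSet G) (w : O) (a b : M) : @delta G M O w (madd a b) = madd (delta w a) (delta w b).
Proof. apply tens_ext. intros u. simpl. destruct (eqd u w); auto. rewrite madd0; auto. Qed.
Lemma delta_zero G (M : ZGmod G) (O : GSet G) (w : O) : @delta G M O w mzero = mzero.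
Proof. apply tens_ext. intros u. simpl. destruct (eqd u w); auto. Qed.
Lemma delta_act G (M : ZGmod G) (O : GSet G) (w : O) (n : M) g : mact g (@delta G M O w n) = delta (sact g w) (mact g n).
Proof.
  apply tens_ext. intros u. change (mact g (tval (delta w n) (sact (ginv g) u)) = tval (delta (sact g w) (mact g n)) u).
  rewrite !tval_delta. destruct (eqd (sact (ginv g) u) w), (eqd u (sact g w)); subst.
  - reflexivity.
  - exfalso. apply n0. rewrite sactKV. auto.
  - exfalso. apply n0. rewrite sactK. auto.
  - apply mact0.
Qed.

Lemma tens_cover G (M : ZGmod G) (O : GSet G) (f : tens G M O) : exists l, NoDup l /\ forall w, tval f w <> mzero -> In w l.
Proof.
  destruct f as [f [l H]]. destruct (nodup_cover _ l) as [l' [N E]].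
  exists l'. split; auto. intros w Hw. apply E. apply H. exact Hw.
Qed.

Lemma delta_ind G (M : ZGmod G) (O : GSet G) (P : tens G M O -> Prop) :
  P mzero -> (forall w n, P (delta w n)) -> (forall a b, P a -> P b -> P (madd a b)) ->
  forall f, P f.
Proof.
  intros H0 Hd Ha.
  assert (K : forall l f, (forall w, tval f w <> mzero -> In w l) -> P f).
  { induction l as [|a l IH]; intros f C.
    - replace f with (@mzero G (tens G M O)); auto.
      apply tens_ext. intros w. destruct (classic (tval f w = mzero)) as [E|E]; auto.
      destruct (C w E).
    - set (f' := madd f (mopp (delta a (tval f a)))).
      replace f with (madd (delta a (tval f a)) f').
      + apply Ha; auto. apply IH. intros w Hw. unfold f' in Hw.
        rewrite tval_add, tval_opp, tval_delta in Hw.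
        destruct (eqd w a). subst. rewrite maddN in Hw. contradiction.
        rewrite mopp0, madd0 in Hw. destruct (C w Hw); auto. congruence.
      + unfold f'. rewrite maddC, <- maddA, maddNl, madd0. reflexivity. }
  intros f. destruct f as [f [l Hl]]. apply (K l). exact Hl.
Qed.

Lemma hom_additive G (M N : ZGmod G) f : is_hom G M N f -> additive f.
Proof. intros [H _]. exact H. Qed.

Lemma hom_ext_delta G (M N : ZGmod G) (O : GSet G) (f1 f2 : tens G M O -> N) :
  additive f1 -> additive f2 -> (forall w n, f1 (delta w n) = f2 (delta w n)) ->
  forall x, f1 x = f2 x.
Proof.
  intros A1 A2 H. apply delta_ind.
  - rewrite !add0; auto.
  - exact H.
  - intros a b Ea Eb. rewrite A1, A2, Ea, Eb. auto.
Qed.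

Lemma is_hom_comp G (A B C : ZGmod G) (f : A -> B) (g : B -> C) :
  is_hom G A B f -> is_hom G B C g -> is_hom G A C (fun x => g (f x)).
Proof. intros [F1 F2] [G1 G2]. split; intros; rewrite ?F1, ?G1, ?F2, ?G2; auto. Qed.

Lemma is_hom_id G (A : ZGmod G) : is_hom G A A (fun x => x).
Proof. split; auto. Qed.

Definition iso {G} (M N : ZGmod G) : Type :=
  {f : M -> N & {g : N -> M | is_hom G M N f /\ is_hom G N M g /\
     (forall x, g (f x) = x) /\ (forall y, f (g y) = y)}}.
Definition isof {G} {M N : ZGmod G} (i : iso M N) : M -> N := projT1 i.
Definition isog {G} {M N : ZGmod G} (i : iso M N) : N -> M := proj1_sig (projT2 i).
Lemma isof_hom G (M N : ZGmod G) (i : @iso G M N) : is_hom G M N (isof i).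
Proof. destruct i as [f [g H]]. apply H. Qed.
Lemma isog_hom G (M N : ZGmod G) (i : @iso G M N) : is_hom G N M (isog i).
Proof. destruct i as [f [g H]]. apply H. Qed.
Lemma isogf G (M N : ZGmod G) (i : @iso G M N) x : isog i (isof i x) = x.
Proof. destruct i as [f [g H]]. apply H. Qed.
Lemma isofg G (M N : ZGmod G) (i : @iso G M N) y : isof i (isog i y) = y.
Proof. destruct i as [f [g H]]. apply H. Qed.

Definition mk_iso {G} (M N : ZGmod G) (f : M -> N) (g : N -> M)
  (H : is_hom G M N f /\ is_hom G N M g /\ (forall x, g (f x) = x) /\ (forall y, f (g y) = y)) : iso M N :=
  existT _ f (exist _ g H).

Definition iso_refl {G} (M : ZGmod G) : iso M M.
Proof. refine (mk_iso M M (fun x => x) (fun x => x) _). repeat split; auto. Defined.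

Definition iso_sym {G} (M N : ZGmod G) (i : iso M N) : iso N M.
Proof.
  refine (mk_iso N M (isog i) (isof i) _).
  split. apply isog_hom. split. apply isof_hom. split; intros; [apply isofg|apply isogf].
Defined.

Definition iso_trans {G} (A B C : ZGmod G) (i : iso A B) (j : iso B C) : iso A C.
Proof.
  refine (mk_iso A C (fun x => isof j (isof i x)) (fun z => isog i (isog j z)) _).
  split. apply is_hom_comp; [apply isof_hom|apply isof_hom].
  split. apply is_hom_comp; [apply isog_hom|apply isog_hom].
  split; intros; rewrite ?isogf, ?isofg; auto.
Defined.

Definition zmod (G : Grp) : ZGmod G.
Proof.
  refine {| mcar := unit; madd := fun _ _ => tt; mzero := tt; mopp := fun _ => tt;
            mact := fun _ _ => tt |}; intros; try reflexivity; destruct x; reflexivity.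
Defined.

Definition dsum {G} (M N : ZGmod G) : ZGmod G.
Proof.
  refine {| mcar := (mcar M * mcar N)%type;
            madd := fun a b => (madd (fst a) (fst b), madd (snd a) (snd b));
            mzero := (mzero, mzero);
            mopp := fun a => (mopp (fst a), mopp (snd a));
            mact := fun g a => (mact g (fst a), mact g (snd a)) |}; intros; simpl.
  - rewrite !maddA; auto.
  - rewrite (maddC _ _ (fst x)), (maddC _ _ (snd x)); auto.
  - rewrite !madd0; destruct x; auto.
  - rewrite !maddN; auto.
  - rewrite !mactD; auto.
  - rewrite !mact1; destruct x; auto.
  - rewrite !mactM; auto.
Defined.

Record is_submod {G} {M : ZGmod G} (P : M -> Prop) : Prop := {
  sm0 : P mzero;
  smA : forall x y, P x -> P y -> P (madd x y);
  smN : forall x, P x -> P (mopp x);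
  smG : forall g x, P x -> P (mact g x) }.

Definition submod {G} (M : ZGmod G) (P : M -> Prop) (HP : is_submod P) : ZGmod G.
Proof.
  refine {| mcar := {x : M | P x};
            madd := fun a b => exist _ (madd (proj1_sig a) (proj1_sig b)) (smA P HP _ _ (proj2_sig a) (proj2_sig b));
            mzero := exist _ mzero (sm0 P HP);
            mopp := fun a => exist _ (mopp (proj1_sig a)) (smN P HP _ (proj2_sig a));
            mact := fun g a => exist _ (mact g (proj1_sig a)) (smG P HP _ _ (proj2_sig a)) |};
  intros; apply sig_eq'; simpl.
  - apply maddA. - apply maddC. - apply madd0. - apply maddN. - apply mactD.
  - apply mact1. - apply mactM.
Defined.
Definition cid {A : Type} {P : A -> Prop} (e : exists x, P x) : {x | P x} :=
  constructive_indefinite_description P e.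

Lemma cid_ext A (P Q : A -> Prop) (p : exists x, P x) (q : exists x, Q x) :
  P = Q -> proj1_sig (cid p) = proj1_sig (cid q).
Proof. intros E. subst. rewrite (proof_irrelevance _ p q). reflexivity. Qed.

Definition orb {G} {O : GSet G} (w : O) : O -> Prop := fun u => exists g, sact g u = w.
Lemma orb_ex G (O : GSet G) (w : O) : exists u, orb w u.
Proof. exists w. exists gone. apply sact1. Qed.
Definition rep {G} {O : GSet G} (w : O) : O := proj1_sig (cid (orb_ex G O w)).
Lemma rep_orb G (O : GSet G) (w : O) : exists g, sact g (rep w) = w.
Proof. exact (proj2_sig (cid (orb_ex G O w))). Qed.
Lemma rep_eq G (O : GSet G) (w : O) h : rep (sact h w) = rep w.
Proof.
  unfold rep. apply cid_ext. apply functional_extensionality. intros u.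
  apply propositional_extensionality. unfold orb. split.
  - intros [g E]. exists (gmul (ginv h) g). rewrite sactM, E, sactK. auto.
  - intros [g E]. exists (gmul h g). rewrite sactM, E. auto.
Qed.
Definition gw {G} {O : GSet G} (w : O) : G := proj1_sig (cid (rep_orb G O w)).
Lemma gw_spec G (O : GSet G) (w : O) : sact (gw w) (rep w) = w.
Proof. exact (proj2_sig (cid (rep_orb G O w))). Qed.


Definition theta' {G} {N M : ZGmod G} {O : GSet G} (th : O -> N -> M) (w : O) (n : N) : M :=
  mact (gw w) (th (rep w) (mact (ginv (gw w)) n)).

Lemma theta'_add G (N M : ZGmod G) (O : GSet G) (th : O -> N -> M) :
  (forall w, additive (th w)) -> forall w, additive (theta' th w).
Proof. intros H w x y. unfold theta'. rewrite mactD, H, mactD. auto. Qed.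

Lemma theta'_equiv G (N M : ZGmod G) (O : GSet G) (th : O -> N -> M) :
  (forall w c x, sact c w = w -> th w (mact c x) = mact c (th w x)) ->
  forall w h n, theta' th (sact h w) (mact h n) = mact h (theta' th w n).
Proof.
  intros Hs w h n. unfold theta'. rewrite rep_eq.
  pose proof (gw_spec G O w) as E1. pose proof (gw_spec G O (sact h w)) as E2.
  rewrite rep_eq in E2.
  set (u := rep w) in *. set (g := gw w) in *. set (g' := gw (sact h w)) in *.
  set (c := gmul (ginv g') (gmul h g)).
  assert (Ec : sact c u = u).
  { unfold c. rewrite !sactM, E1, <- E2, sactK. auto. }
  assert (E3 : mact (ginv g') (mact h n) = mact c (mact (ginv g) n)).
  { unfold c. rewrite <- !mactM. f_equal. rewrite <- !gmulA, gmulVr, gmul1r. auto. }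
  rewrite E3, Hs by exact Ec. unfold c. rewrite <- !mactM. f_equal.
  rewrite gmulA, gmulVr, gmul1l. auto.
Qed.

Definition Theta {G} {N M : ZGmod G} {O : GSet G} (th : O -> N -> M) (f : tens G N O) : M :=
  lsum (proj1_sig (cid (tens_cover G N O f))) (fun w => theta' th w (tval f w)).

Lemma Theta_list G (N M : ZGmod G) (O : GSet G) (th : O -> N -> M) :
  (forall w, additive (th w)) ->
  forall f l, NoDup l -> (forall w, tval f w <> mzero -> In w l) ->
  Theta th f = lsum l (fun w => theta' th w (tval f w)).
Proof.
  intros Ha f l Nl Cl. unfold Theta. destruct (cid (tens_cover G N O f)) as [l0 [N0 C0]]. simpl.
  apply lsum_indep; auto.
  - intros w Hw. apply C0. intros E. apply Hw. rewrite E. apply add0. apply theta'_add; auto.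
  - intros w Hw. apply Cl. intros E. apply Hw. rewrite E. apply add0. apply theta'_add; auto.
Qed.

Lemma lsum_sub G (M : ZGmod G) T (S : M -> Prop) (HS : is_submod S) (l : list T) (h : T -> M) :
  (forall w, S (h w)) -> S (lsum l h).
Proof.
  intros H. induction l; simpl. apply (sm0 S HS). apply (smA S HS); auto.
Qed.

Lemma core_lemma G (N M : ZGmod G) (O : GSet G) (th : O -> N -> M) :
  (forall w, additive (th w)) ->
  (forall w c x, sact c w = w -> th w (mact c x) = mact c (th w x)) ->
  exists Th : tens G N O -> M,
    is_hom G (tens G N O) M Th /\
    (forall w n, exists g u, sact g u = w /\ Th (delta w n) = mact g (th u (mact (ginv g) n))) /\
    (forall S : M -> Prop, is_submod S -> (forall w n, S (th w n)) -> forall f, S (Th f)).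
Proof.
  intros Ha Hs. exists (Theta th).
  assert (Ha' := theta'_add G N M O th Ha).
  split; [split|split].
  - intros f1 f2.
    destruct (tens_cover G N O f1) as [l1 [_ C1]]. destruct (tens_cover G N O f2) as [l2 [_ C2]].
    destruct (nodup_cover _ (l1 ++ l2)) as [l [Nl El]].
    assert (C1' : forall w, tval f1 w <> mzero -> In w l).
    { intros w H. apply El. apply in_or_app. left. auto. }
    assert (C2' : forall w, tval f2 w <> mzero -> In w l).
    { intros w H. apply El. apply in_or_app. right. auto. }
    rewrite !(Theta_list G N M O th Ha _ l Nl); auto.
    + rewrite <- lsum_add. apply lsum_ext. intros w _. rewrite tval_add. apply Ha'.
    + intros w H. rewrite tval_add in H.
      destruct (classic (tval f1 w = mzero)) as [E|E]; auto.
      rewrite E, madd0l in H. auto.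
  - intros g f. destruct (tens_cover G N O f) as [l [Nl Cl]].
    rewrite (Theta_list G N M O th Ha f l Nl Cl).
    rewrite (Theta_list G N M O th Ha _ (map (sact g) l)).
    + rewrite lsum_list_map, lsum_mact. apply lsum_ext. intros w _.
      rewrite tval_act, sactK. apply theta'_equiv; auto.
    + apply NoDup_map_NoDup_ForallPairs; auto. intros x y _ _ E.
      rewrite <- (sactK G O g x), E, sactK. auto.
    + intros w H. rewrite tval_act in H. replace w with (sact g (sact (ginv g) w)) by apply sactKV.
      apply in_map. apply Cl. intros E. apply H. rewrite E. apply mact0.
  - intros w n. exists (gw w), (rep w). split. apply gw_spec.
    rewrite (Theta_list G N M O th Ha _ [w]).
    + simpl. unfold theta'. simpl. destruct (eqd w w); [|congruence]. rewrite madd0. reflexivity.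
    + constructor; auto. constructor.
    + intros u H. rewrite tval_delta in H. destruct (eqd u w); [left; auto|contradiction].
  - intros S HS Hth f. unfold Theta. apply lsum_sub; auto.
    intros w. unfold theta'. apply (smG S HS); auto.
Qed.
Lemma msub_add G (M : ZGmod G) (a b c d : M) :
  msub (madd a b) (madd c d) = madd (msub a c) (msub b d).
Proof.
  unfold msub. rewrite mopp_add. rewrite <- !maddA. f_equal. rewrite !maddA. f_equal.
  apply maddC.
Qed.
Lemma msub_addK G (M : ZGmod G) (a b : M) : msub (madd a b) b = a.
Proof. unfold msub. rewrite <- maddA, maddN, madd0. auto. Qed.
Lemma madd_msubK G (M : ZGmod G) (a b : M) : madd (msub a b) b = a.
Proof. unfold msub. rewrite <- maddA, maddNl, madd0. auto. Qed.
Lemma msub0 G (M : ZGmod G) (a : M) : msub a mzero = a.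
Proof. unfold msub. rewrite mopp0, madd0. auto. Qed.
Lemma mact_sub G (M : ZGmod G) g (a b : M) : mact g (msub a b) = msub (mact g a) (mact g b).
Proof. unfold msub. rewrite mactD, mact_opp. auto. Qed.

Definition stab {G} {O : GSet G} (w : O) : G -> Prop := fun g => sact g w = w.

Lemma Delta_stab_fin G (w : Delta G) : fin_subgroup G (stab w).
Proof.
  unfold stab. split; [|split; [|split]].
  - apply sact1.
  - intros x y Hx Hy. rewrite sactM, Hy, Hx. auto.
  - intros x Hx. rewrite <- Hx at 1. apply sactK.
  - destruct w as [[K S] pf].
    assert (pf' := pf). destruct pf' as [[HK1 [_ [_ [lK HlK]]]] [g0 Hg0]]. simpl in *.
    exists (map (fun k => gmul g0 (gmul k (ginv g0))) lK).
    intros g Hg.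
    apply (f_equal (@proj1_sig _ _)) in Hg. simpl in Hg. injection Hg as E.
    assert (Sg0 : S g0). { apply Hg0. exists gone. split; auto. rewrite gmul1r; auto. }
    assert (S1 : S (gmul g g0)).
    { rewrite <- E. rewrite gKl. auto. }
    apply Hg0 in S1. destruct S1 as [k [Kk Ek]].
    replace g with (gmul g0 (gmul k (ginv g0))).
    + apply (in_map (fun k => gmul g0 (gmul k (ginv g0)))). apply HlK. auto.
    + rewrite gmulA, <- Ek, <- gmulA, gmulVr, gmul1r. auto.
Qed.

Lemma Delta_fixed (G : Grp) (H : G -> Prop) : fin_subgroup G H ->
  exists w0 : Delta G, forall h, H h -> sact h w0 = w0.
Proof.
  intros HH. assert (pf : fin_subgroup G (fst (H, H)) /\ is_lcoset G (fst (H, H)) (snd (H, H))).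
  { split; auto. exists gone. intros x. simpl. split.
    - intros Hx. exists x. split; auto. rewrite gmul1l; auto.
    - intros [k [Kk E]]. subst. rewrite gmul1l; auto. }
  exists (exist _ (H, H) pf). intros h Hh. apply sig_eq'. simpl. f_equal.
  apply functional_extensionality. intros x. apply propositional_extensionality.
  destruct HH as [H1 [HM [HI _]]]. split.
  - intros Hx. replace x with (gmul h (gmul (ginv h) x)) by apply gKr. auto.
  - intros Hx. auto.
Qed.

Definition Hret {G} {M : ZGmod G} (Q : M -> Prop) (H : G -> Prop) (r : M -> M) : Prop :=
  additive r /\ (forall h x, H h -> r (mact h x) = mact h (r x)) /\
  (forall x, Q (r x)) /\ (forall x, Q x -> r x = x).

Definition Fsplit_sub {G} (M : ZGmod G) (Q : M -> Prop) : Prop :=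
  is_submod Q /\ forall H, fin_subgroup G H -> exists r, Hret Q H r.

Definition Hsec {G} {A C : ZGmod G} (pi : A -> C) (H : G -> Prop) (s : C -> A) : Prop :=
  additive s /\ (forall h x, H h -> s (mact h x) = mact h (s x)) /\ (forall c, pi (s c) = c).

Definition Fsurj {G} {A C : ZGmod G} (pi : A -> C) : Prop :=
  forall H, fin_subgroup G H -> exists s, Hsec pi H s.

Lemma ker_submod G (A C : ZGmod G) (pi : A -> C) : is_hom G A C pi -> is_submod (fun x => pi x = mzero).
Proof.
  intros [Ha Hg]. split.
  - apply add0; auto.
  - intros x y Hx Hy. rewrite Ha, Hx, Hy, madd0. auto.
  - intros x Hx. rewrite addN, Hx; auto. apply mopp0.
  - intros g x Hx. rewrite Hg, Hx. apply mact0.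
Qed.

Lemma sec_of_ret G (A C : ZGmod G) (pi : A -> C) (H : G -> Prop) (r : A -> A) :
  is_hom G A C pi -> (forall c, exists a, pi a = c) -> fin_subgroup G H ->
  Hret (fun x => pi x = mzero) H r -> exists s, Hsec pi H s.
Proof.
  intros [Pa Pg] Hsurj HH [Ra [Rg [Rk Rf]]].
  set (pre := fun c => proj1_sig (cid (Hsurj c))).
  assert (Hpre : forall c, pi (pre c) = c) by (intros c; exact (proj2_sig (cid (Hsurj c)))).
  assert (K : forall a b, pi a = pi b -> msub a (r a) = msub b (r b)).
  { intros a b E. assert (Hk : pi (msub a b) = mzero).
    { rewrite (addB _ _ _ pi Pa), E. apply msubxx. }
    apply Rf in Hk.
    replace a with (madd b (msub a b)) by (rewrite maddC; apply madd_msubK).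
    rewrite Ra. rewrite msub_add. rewrite Hk. rewrite msubxx, madd0. auto. }
  exists (fun c => msub (pre c) (r (pre c))). split; [|split].
  - intros x y. rewrite (K (pre (madd x y)) (madd (pre x) (pre y))).
    + rewrite Ra. apply msub_add.
    + rewrite Pa, !Hpre. auto.
  - intros h x Hh. rewrite (K (pre (mact h x)) (mact h (pre x))).
    + rewrite Rg by auto. symmetry. apply mact_sub.
    + rewrite Pg, !Hpre. auto.
  - intros c. rewrite (addB _ _ _ pi Pa), Hpre, Rk, msub0. auto.
Qed.
Lemma bar_step G (M : ZGmod G) (Q : M -> Prop) : Fsplit_sub M Q ->
  exists Th : tens G M (Delta G) -> M,
    is_hom G _ M Th /\ (forall f, Q (Th f)) /\ (forall w x, Q x -> Th (delta w x) = x) /\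
    Fsplit_sub (tens G M (Delta G)) (fun f => Th f = mzero) /\
    (forall H, fin_subgroup G H -> exists s : M -> tens G M (Delta G),
        additive s /\ (forall h x, H h -> s (mact h x) = mact h (s x)) /\
        (forall x, Q x -> Th (s x) = x)).
Proof.
  intros [HQ HS].
  set (th := fun w : Delta G => proj1_sig (cid (HS (stab w) (Delta_stab_fin G w)))).
  assert (Hth : forall w, Hret Q (stab w) (th w)).
  { intros w. exact (proj2_sig (cid (HS (stab w) (Delta_stab_fin G w)))). }
  destruct (core_lemma G M M (Delta G) th) as [Th [Hh [Hd Hsub]]].
  - intros w. apply (Hth w).
  - intros w c x Hc. apply (Hth w). exact Hc.
  - assert (HQT : forall f, Q (Th f)).
    { apply Hsub; auto. intros w n. apply (Hth w). }
    assert (HD : forall w x, Q x -> Th (delta w x) = x).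
    { intros w x Qx. destruct (Hd w x) as [g [u [E1 E2]]]. rewrite E2.
      destruct (Hth u) as [_ [_ [_ Hf]]]. rewrite Hf. apply mactKV.
      apply (smG Q HQ). auto. }
    exists Th. split; auto. split; auto. split; auto. split.
    + split. apply ker_submod; auto.
      intros H HH. destruct (Delta_fixed G H HH) as [w0 Hw0].
      exists (fun f => msub f (delta w0 (Th f))). split; [|split; [|split]].
      * intros x y. destruct Hh as [Ha _]. rewrite Ha, delta_add. apply msub_add.
      * intros h x Hh'. destruct Hh as [_ Hg]. rewrite Hg, mact_sub, delta_act, Hw0; auto.
      * intros x. destruct Hh as [Ha _]. rewrite (addB _ _ _ Th Ha), HD; auto. apply msubxx.
      * intros x Hx. cbv beta. rewrite Hx, delta_zero. apply msub0.
    + intros H HH. destruct (Delta_fixed G H HH) as [w0 Hw0].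
      exists (fun x => delta w0 x). split; [|split].
      * intros x y. apply delta_add.
      * intros h x Hh'. rewrite delta_act, Hw0; auto.
      * intros x Qx. apply HD; auto.
Qed.

Lemma lifting G (P A C : ZGmod G) (pi : A -> C) (phi : P -> C) :
  F_projective G P -> is_hom G A C pi -> Fsurj pi -> is_hom G P C phi ->
  exists psi : P -> A, is_hom G P A psi /\ forall x, pi (psi x) = phi x.
Proof.
  intros [N [s [p [Hs [Hp Hps]]]]] Hpi Hsur Hphi.
  set (phi' := fun f => phi (p f)).
  assert (Hphi' : is_hom G _ C phi') by (unfold phi'; apply (is_hom_comp G _ P C p phi); auto).
  set (sg := fun w : Delta G => proj1_sig (cid (Hsur (stab w) (Delta_stab_fin G w)))).
  assert (Hsg : forall w, Hsec pi (stab w) (sg w)).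
  { intros w. exact (proj2_sig (cid (Hsur (stab w) (Delta_stab_fin G w)))). }
  set (th := fun (w : Delta G) (n : N) => sg w (phi' (delta w n))).
  destruct (core_lemma G N A (Delta G) th) as [Th [Hh [Hd _]]].
  - intros w x y. unfold th. destruct Hphi' as [Ha _]. rewrite delta_add, Ha. apply (Hsg w).
  - intros w c x Hc. unfold th. destruct (Hsg w) as [_ [Hg _]]. rewrite <- Hg by auto.
    f_equal. destruct Hphi' as [_ Hg']. rewrite <- Hg'. f_equal. rewrite delta_act.
    unfold stab in Hc. rewrite Hc. auto.
  - assert (E : forall f, pi (Th f) = phi' f).
    { apply hom_ext_delta.
      - apply hom_additive. apply is_hom_comp; auto.
      - apply hom_additive; auto.
      - intros w n. destruct (Hd w n) as [g [u [E1 E2]]]. rewrite E2.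
        destruct Hpi as [_ Pg]. rewrite Pg. unfold th. destruct (Hsg u) as [_ [_ Hc]].
        rewrite Hc. destruct Hphi' as [_ Hg']. rewrite <- Hg'. rewrite delta_act, mactKV, E1. auto. }
    exists (fun x => Th (s x)). split.
    + apply is_hom_comp; auto.
    + intros x. rewrite E. unfold phi'. rewrite Hps. auto.
Qed.

Lemma Fproj_tens G (N : ZGmod G) : F_projective G (tens G N (Delta G)).
Proof.
  exists N, (fun x => x), (fun x => x). split. apply is_hom_id. split. apply is_hom_id. auto.
Qed.

Lemma Fproj_retract G (P Q : ZGmod G) (s : Q -> P) (p : P -> Q) :
  F_projective G P -> is_hom G Q P s -> is_hom G P Q p -> (forall x, p (s x) = x) ->
  F_projective G Q.
Proof.
  intros [N [s' [p' [Hs' [Hp' Hps']]]]] Hs Hp Hps.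
  exists N, (fun x => s' (s x)), (fun y => p (p' y)). split. apply is_hom_comp; auto.
  split. apply is_hom_comp; auto. intros x. rewrite Hps', Hps. auto.
Qed.

Lemma Fproj_iso G (P Q : ZGmod G) (i : iso P Q) : F_projective G P -> F_projective G Q.
Proof.
  intros HP. apply (Fproj_retract G P Q (isog i) (isof i)); auto.
  apply isog_hom. apply isof_hom. apply isofg.
Qed.

Lemma pair_finsupp G (M N : ZGmod G) (O : GSet G) (f : tens G M O) (g : tens G N O) :
  finsupp G (dsum M N) O (fun w => (tval f w, tval g w)).
Proof.
  destruct f as [f [l1 H1]], g as [g [l2 H2]]. exists (l1 ++ l2). intros w Hw. apply in_or_app.
  simpl in *. destruct (classic (f w = mzero)) as [E|E]; auto.
  right. apply H2. intros E'. apply Hw. rewrite E, E'. auto.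
Qed.
Lemma fst_finsupp G (M N : ZGmod G) (O : GSet G) (f : tens G (dsum M N) O) :
  finsupp G M O (fun w => fst (tval f w)).
Proof.
  destruct f as [f [l H]]. exists l. intros w Hw. apply H. intros E. apply Hw. simpl. rewrite E. auto.
Qed.
Lemma snd_finsupp G (M N : ZGmod G) (O : GSet G) (f : tens G (dsum M N) O) :
  finsupp G N O (fun w => snd (tval f w)).
Proof.
  destruct f as [f [l H]]. exists l. intros w Hw. apply H. intros E. apply Hw. simpl. rewrite E. auto.
Qed.

Lemma dsum_ext G (M N : ZGmod G) (x y : dsum M N) : fst x = fst y -> snd x = snd y -> x = y.
Proof. destruct x, y; simpl; intros; subst; auto. Qed.

Definition tens_dsum_iso {G} (M N : ZGmod G) (O : GSet G) :
  iso (dsum (tens G M O) (tens G N O)) (tens G (dsum M N) O).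
Proof.
  refine (mk_iso (dsum (tens G M O) (tens G N O)) (tens G (dsum M N) O) (fun x : dsum (tens G M O) (tens G N O) => exist _ _ (pair_finsupp G M N O (fst x) (snd x)))
                     (fun f : tens G (dsum M N) O => (exist _ _ (fst_finsupp G M N O f), exist _ _ (snd_finsupp G M N O f))) _).
  split; [split|split; [split|split]].
  - intros x y. apply tens_ext. intros w. reflexivity.
  - intros g x. apply tens_ext. intros w. reflexivity.
  - intros x y. apply dsum_ext; apply tens_ext; intros w; reflexivity.
  - intros g x. apply dsum_ext; apply tens_ext; intros w; reflexivity.
  - intros [a b]. apply dsum_ext; apply tens_ext; intros w; reflexivity.
  - intros f. apply tens_ext. intros w. symmetry. apply surjective_pairing.
Defined.

Lemma is_hom_dsum G (A B C D : ZGmod G) (f : A -> C) (g : B -> D) :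
  is_hom G A C f -> is_hom G B D g -> is_hom G (dsum A B) (dsum C D) (fun x => (f (fst x), g (snd x))).
Proof.
  intros [F1 F2] [G1 G2]. split; intros; simpl; rewrite ?F1, ?G1, ?F2, ?G2; auto.
Qed.

Lemma Fproj_dsum G (P Q : ZGmod G) : F_projective G P -> F_projective G Q -> F_projective G (dsum P Q).
Proof.
  intros [N1 [s1 [p1 [Hs1 [Hp1 E1]]]]] [N2 [s2 [p2 [Hs2 [Hp2 E2]]]]].
  apply (Fproj_retract G (tens G (dsum N1 N2) (Delta G)) (dsum P Q)
          (fun x : dsum P Q => isof (tens_dsum_iso N1 N2 (Delta G)) (s1 (fst x), s2 (snd x)))
          (fun y : tens G (dsum N1 N2) (Delta G) => let z := isog (tens_dsum_iso N1 N2 (Delta G)) y in (p1 (fst z), p2 (snd z)))).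
  - apply Fproj_tens.
  - apply (is_hom_comp G _ (dsum (tens G N1 (Delta G)) (tens G N2 (Delta G)))).
    apply is_hom_dsum; auto. apply isof_hom.
  - apply (is_hom_comp G _ (dsum (tens G N1 (Delta G)) (tens G N2 (Delta G))) (dsum P Q) _
             (fun z => (p1 (fst z), p2 (snd z)) : dsum P Q)).
    apply isog_hom. apply is_hom_dsum; auto.
  - intros [a b]. cbv beta zeta. rewrite isogf. simpl. rewrite E1, E2. auto.
Qed.

Lemma Fproj_zero G : F_projective G (zmod G).
Proof.
  exists (zmod G), (fun _ => mzero), (fun _ => tt). split; [split|split; [split|]]; intros.
  - symmetry. apply madd0.
  - symmetry. apply mact0.
  - reflexivity.
  - reflexivity.
  - destruct x; reflexivity.
Qed.
Definition kermod {G} {A C : ZGmod G} (pi : A -> C) (Hpi : is_hom G A C pi) : ZGmod G :=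
  submod A (fun x => pi x = mzero) (ker_submod G A C pi Hpi).

Lemma Fsurj_surj G (A C : ZGmod G) (pi : A -> C) : Fsurj pi -> forall c, exists a, pi a = c.
Proof.
  intros H c. destruct (H (fun g => g = gone)) as [s [_ [_ Hs]]].
  - split; [|split; [|split]]; auto.
    + intros x y -> ->. apply gmul1l.
    + intros x ->. apply ginv1.
    + exists [gone]. intros x ->. left; auto.
  - exists (s c). auto.
Qed.

Lemma schanuel G (A A' C C' : ZGmod G) (pi : A -> C) (pi' : A' -> C')
  (Hpi : is_hom G A C pi) (Hpi' : is_hom G A' C' pi') :
  Fsurj pi -> Fsurj pi' -> F_projective G A -> F_projective G A' -> iso C C' ->
  inhabited (iso (dsum A (kermod pi' Hpi')) (dsum A' (kermod pi Hpi))).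
Proof.
  intros Sp Sp' PA PA' psi.
  destruct (lifting G A A' C' pi' (fun a => isof psi (pi a)) PA Hpi' Sp') as [al [Hal Eal]].
  { apply is_hom_comp; auto. apply isof_hom. }
  destruct (lifting G A' A C pi (fun a => isog psi (pi' a)) PA' Hpi Sp) as [be [Hbe Ebe]].
  { apply is_hom_comp; auto. apply isog_hom. }
  destruct Hpi as [Pa Pg], Hpi' as [Pa' Pg'].
  destruct (isof_hom G C C' psi) as [Fa Fg]. destruct (isog_hom G C C' psi) as [Ga Gg].
  destruct Hal as [Aa Ag], Hbe as [Ba Bg].
  assert (pf1 : forall (a : A) (k : kermod pi' (conj Pa' Pg')),
     pi (msub a (be (madd (al a) (proj1_sig k)))) = mzero).
  { intros a [k Hk]. simpl. rewrite (addB _ _ _ pi Pa), Ebe, Pa', Eal, Hk, madd0, (isogf G C C' psi). apply msubxx. }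
  assert (pf2 : forall (a : A') (k : kermod pi (conj Pa Pg)),
     pi' (msub a (al (madd (be a) (proj1_sig k)))) = mzero).
  { intros a [k Hk]. simpl. rewrite (addB _ _ _ pi' Pa'), Eal, Pa, Ebe, Hk, madd0, (isofg G C C' psi). apply msubxx. }
  constructor.
  refine (mk_iso (dsum A (kermod pi' (conj Pa' Pg'))) (dsum A' (kermod pi (conj Pa Pg)))
     (fun x => (madd (al (fst x)) (proj1_sig (snd x)),
                exist _ (msub (fst x) (be (madd (al (fst x)) (proj1_sig (snd x))))) (pf1 (fst x) (snd x))))
     (fun y => (madd (be (fst y)) (proj1_sig (snd y)),
                exist _ (msub (fst y) (al (madd (be (fst y)) (proj1_sig (snd y))))) (pf2 (fst y) (snd y))))
     _).
  split; [split|split; [split|split]].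
  - intros [a1 [k1 H1]] [a2 [k2 H2]]. apply dsum_ext; simpl.
    + rewrite Aa. rewrite <- !maddA. f_equal. rewrite !maddA. f_equal. apply maddC.
    + apply sig_eq'. simpl. rewrite Aa.
      replace (madd (madd (al a1) (al a2)) (madd k1 k2)) with (madd (madd (al a1) k1) (madd (al a2) k2)).
      * rewrite Ba. apply msub_add.
      * rewrite <- !maddA. f_equal. rewrite !maddA. f_equal. apply maddC.
  - intros g [a [k H]]. apply dsum_ext; simpl.
    + rewrite Ag, mactD. auto.
    + apply sig_eq'. simpl. rewrite Ag, <- mactD, Bg, mact_sub. auto.
  - intros [a1 [k1 H1]] [a2 [k2 H2]]. apply dsum_ext; simpl.
    + rewrite Ba. rewrite <- !maddA. f_equal. rewrite !maddA. f_equal. apply maddC.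
    + apply sig_eq'. simpl. rewrite Ba.
      replace (madd (madd (be a1) (be a2)) (madd k1 k2)) with (madd (madd (be a1) k1) (madd (be a2) k2)).
      * rewrite Aa. apply msub_add.
      * rewrite <- !maddA. f_equal. rewrite !maddA. f_equal. apply maddC.
  - intros g [a [k H]]. apply dsum_ext; simpl.
    + rewrite Bg, mactD. auto.
    + apply sig_eq'. simpl. rewrite Bg, <- mactD, Ag, mact_sub. auto.
  - intros [a [k H]].
    assert (E : madd (be (madd (al a) k)) (msub a (be (madd (al a) k))) = a).
    { rewrite maddC. apply madd_msubK. }
    apply dsum_ext; simpl.
    + rewrite E. auto.
    + apply sig_eq'. simpl. rewrite E. rewrite maddC. apply msub_addK.
  - intros [a [k H]].
    assert (E : madd (al (madd (be a) k)) (msub a (al (madd (be a) k))) = a).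
    { rewrite maddC. apply madd_msubK. }
    apply dsum_ext; simpl.
    + rewrite E. auto.
    + apply sig_eq'. simpl. rewrite E. rewrite maddC. apply msub_addK.
Qed.
Definition stage_ty (G : Grp) : Type := {M : ZGmod G & {Q : M -> Prop | Fsplit_sub M Q}}.

Definition bspec {G} (M : ZGmod G) (Q : M -> Prop) (Th : tens G M (Delta G) -> M) : Prop :=
    is_hom G _ M Th /\ (forall f, Q (Th f)) /\ (forall w x, Q x -> Th (delta w x) = x) /\
    Fsplit_sub (tens G M (Delta G)) (fun f => Th f = mzero) /\
    (forall H, fin_subgroup G H -> exists s : M -> tens G M (Delta G),
        additive s /\ (forall h x, H h -> s (mact h x) = mact h (s x)) /\
        (forall x, Q x -> Th (s x) = x)).

Definition bstep {G} (s : stage_ty G) : {Th | bspec (projT1 s) (proj1_sig (projT2 s)) Th} :=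
  cid (bar_step G (projT1 s) (proj1_sig (projT2 s)) (proj2_sig (projT2 s))).

Lemma triv_Fsplit G : Fsplit_sub (trivZ G) (fun _ => True).
Proof.
  split. split; auto. intros H _. exists (fun x => x). split; [|split; [|split]]; auto.
  intros x y; auto.
Qed.

Fixpoint stage (G : Grp) (i : nat) : stage_ty G :=
  match i with
  | 0 => existT _ (trivZ G) (exist _ (fun _ => True) (triv_Fsplit G))
  | S i => existT _ (tens G (projT1 (stage G i)) (Delta G))
             (exist _ (fun f => proj1_sig (bstep (stage G i)) f = mzero)
                (proj1 (proj2 (proj2 (proj2 (proj2_sig (bstep (stage G i))))))))
  end.

Definition Bm (G : Grp) (i : nat) : ZGmod G := projT1 (stage G i).
Definition Qp (G : Grp) (i : nat) : Bm G i -> Prop := proj1_sig (projT2 (stage G i)).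
Definition beta (G : Grp) (i : nat) : Bm G (S i) -> Bm G i := proj1_sig (bstep (stage G i)).

Lemma Bm_S G i : Bm G (S i) = tens G (Bm G i) (Delta G).
Proof. reflexivity. Qed.

Lemma Qp_Fsplit G i : Fsplit_sub (Bm G i) (Qp G i).
Proof. exact (proj2_sig (projT2 (stage G i))). Qed.
Lemma Qp_submod G i : is_submod (Qp G i).
Proof. apply Qp_Fsplit. Qed.
Lemma beta_spec G i : bspec (Bm G i) (Qp G i) (beta G i).
Proof. exact (proj2_sig (bstep (stage G i))). Qed.
Lemma beta_hom G i : is_hom G (Bm G (S i)) (Bm G i) (beta G i).
Proof. apply (beta_spec G i). Qed.
Lemma beta_Q G i f : Qp G i (beta G i f).
Proof. apply (beta_spec G i). Qed.
Lemma beta_delta G i w x : Qp G i x -> beta G i (delta w x) = x.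
Proof. apply (beta_spec G i). Qed.
Lemma Qp_S G i f : Qp G (S i) f = (beta G i f = mzero).
Proof. reflexivity. Qed.
Lemma beta_sec G i : forall H, fin_subgroup G H -> exists s : Bm G i -> Bm G (S i),
        additive s /\ (forall h x, H h -> s (mact h x) = mact h (s x)) /\
        (forall x, Qp G i x -> beta G i (s x) = x).
Proof. apply (beta_spec G i). Qed.

Definition Qmod (G : Grp) (i : nat) : ZGmod G := submod (Bm G i) (Qp G i) (Qp_submod G i).

Definition betac (G : Grp) (i : nat) (f : Bm G (S i)) : Qmod G i := exist _ (beta G i f) (beta_Q G i f).

Lemma betac_hom G i : is_hom G _ (Qmod G i) (betac G i).
Proof.
  destruct (beta_hom G i) as [Ha Hg]. split; intros; apply sig_eq'; [apply Ha|apply Hg].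
Qed.

Lemma betac_Fsurj G i : Fsurj (betac G i).
Proof.
  intros H HH. destruct (beta_sec G i H HH) as [s [Sa [Sg Ss]]].
  exists (fun q => s (proj1_sig q)). split; [|split].
  - intros x y. apply Sa.
  - intros h x Hh. apply Sg. auto.
  - intros [q Hq]. apply sig_eq'. simpl. apply Ss. auto.
Qed.

Lemma Bm_Fproj G i : F_projective G (Bm G (S i)).
Proof. apply Fproj_tens. Qed.
Definition iso_dsum {G} (A A' B B' : ZGmod G) (i : iso A A') (j : iso B B') : iso (dsum A B) (dsum A' B').
Proof.
  refine (mk_iso (dsum A B) (dsum A' B') (fun x => (isof i (fst x), isof j (snd x)) : dsum A' B')
                 (fun y => (isog i (fst y), isog j (snd y)) : dsum A B) _).
  split. apply is_hom_dsum; apply isof_hom. split. apply is_hom_dsum; apply isog_hom.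
  split; intros [a b]; simpl; rewrite ?isogf, ?isofg; auto.
Defined.

Definition iso_swap {G} (A B : ZGmod G) : iso (dsum A B) (dsum B A).
Proof.
  refine (mk_iso (dsum A B) (dsum B A) (fun x => (snd x, fst x) : dsum B A)
                 (fun y => (snd y, fst y) : dsum A B) _).
  split; [split|split; [split|split]]; intros; simpl; auto.
  - destruct x; auto.
  - destruct y; auto.
Defined.

Definition iso_sub {G} (M : ZGmod G) (P P' : M -> Prop) (HP : is_submod P) (HP' : is_submod P')
  (E : forall x, P x <-> P' x) : iso (submod M P HP) (submod M P' HP').
Proof.
  refine (mk_iso (submod M P HP) (submod M P' HP')
            (fun x => exist _ (proj1_sig x) (proj1 (E _) (proj2_sig x)) : submod M P' HP')
            (fun y => exist _ (proj1_sig y) (proj2 (E _) (proj2_sig y)) : submod M P HP) _).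
  repeat split; intros; apply sig_eq'; reflexivity.
Defined.

Definition prodmap {G} {A C : ZGmod G} (X : ZGmod G) (pi : A -> C) (z : dsum A X) : dsum C X :=
  (pi (fst z), snd z).

Lemma prodmap_hom G (A C X : ZGmod G) (pi : A -> C) : is_hom G A C pi -> is_hom G _ _ (prodmap X pi).
Proof. intros H. exact (is_hom_dsum G A X C X pi (fun x => x) H (is_hom_id G X)). Qed.

Lemma prodmap_Fsurj G (A C X : ZGmod G) (pi : A -> C) : Fsurj pi -> Fsurj (prodmap X pi).
Proof.
  intros S H HH. destruct (S H HH) as [s [Sa [Sg Ss]]].
  exists (fun y => (s (fst y), snd y) : dsum A X). split; [|split].
  - intros x y. simpl. rewrite Sa. auto.
  - intros h x Hh. simpl. rewrite Sg; auto.
  - intros [c x]. unfold prodmap. simpl. rewrite Ss. auto.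
Qed.

Lemma ker_prodmap_pf G (A C X : ZGmod G) (pi : A -> C) (Hpi : is_hom G A C pi)
  (z : kermod (prodmap X pi) (prodmap_hom G A C X pi Hpi)) : pi (fst (proj1_sig z)) = mzero.
Proof. destruct z as [[a x] E]. simpl. unfold prodmap in E. simpl in E. injection E. auto. Qed.

Definition iso_ker_prodmap {G} (A C X : ZGmod G) (pi : A -> C) (Hpi : is_hom G A C pi) :
  iso (kermod (prodmap X pi) (prodmap_hom G A C X pi Hpi)) (kermod pi Hpi).
Proof.
  assert (pf2 : forall k : kermod pi Hpi, prodmap X pi ((proj1_sig k, mzero) : dsum A X) = mzero).
  { intros [k Hk]. unfold prodmap. simpl. rewrite Hk. auto. }
  refine (mk_iso (kermod (prodmap X pi) (prodmap_hom G A C X pi Hpi)) (kermod pi Hpi)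
            (fun z : kermod (prodmap X pi) (prodmap_hom G A C X pi Hpi) => exist _ (fst (proj1_sig z)) (ker_prodmap_pf G A C X pi Hpi z) : kermod pi Hpi)
            (fun k : kermod pi Hpi => exist _ ((proj1_sig k, mzero) : dsum A X) (pf2 k)
                : kermod (prodmap X pi) (prodmap_hom G A C X pi Hpi)) _).
  repeat split; intros; apply sig_eq'; simpl; auto.
  - apply dsum_ext; simpl; auto. symmetry; apply madd0.
  - apply dsum_ext; simpl; auto. symmetry; apply mact0.
  - destruct x as [[a b] E]. simpl. unfold prodmap in E. simpl in E. injection E. intros -> _. auto.
Defined.
Definition Lcar (G : Grp) (P : nat -> ZGmod G) (i : nat) : ZGmod G :=
  match i with 0 => trivZ G | S j => P j end.
Definition Lpred (G : Grp) (P : nat -> ZGmod G) (d : forall i, P (S i) -> P i) (eps : P 0 -> trivZ G)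
  (i : nat) : Lcar G P i -> Prop :=
  match i as i0 return Lcar G P i0 -> Prop with
  | 0 => fun _ => True
  | S j => in_ker G (trivZ G) P d eps j
  end.
Definition piL (G : Grp) (P : nat -> ZGmod G) (d : forall i, P (S i) -> P i) (eps : P 0 -> trivZ G)
  (i : nat) : P i -> Lcar G P i :=
  match i as i0 return P i0 -> Lcar G P i0 with
  | 0 => eps
  | S j => d j
  end.

Lemma in_ker_piL G P d eps i x : in_ker G (trivZ G) P d eps i x <-> piL G P d eps i x = mzero.
Proof. destruct i; simpl; tauto. Qed.

Definition RES (G : Grp) (n : nat) P d eps : Prop :=
  exact_resolution G (trivZ G) n P d eps /\ F_split G (trivZ G) n P d eps /\
  forall i, i <= n -> F_projective G (P i).

Lemma piL_hom G n P d eps i : RES G n P d eps -> i <= n -> is_hom G _ _ (piL G P d eps i).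
Proof.
  intros [[He [Hd _]] _] Hi. destruct i; simpl; [auto | apply Hd; lia].
Qed.

Lemma Lpred_submod G n P d eps i : RES G n P d eps -> i <= n -> is_submod (Lpred G P d eps i).
Proof.
  intros R Hi. destruct i.
  - split; simpl; auto.
  - simpl. pose proof (ker_submod G _ _ _ (piL_hom G n P d eps i R ltac:(lia))) as K.
    destruct K as [K0 KA KN KG]. split; intros; apply in_ker_piL.
    + auto. + apply KA; apply in_ker_piL; auto. + apply KN; apply in_ker_piL; auto.
    + apply KG; apply in_ker_piL; auto.
Qed.

Lemma piL_img G n P d eps i : RES G n P d eps -> i <= n -> forall x, Lpred G P d eps i (piL G P d eps i x).
Proof.
  intros [[He [Hd [Hs [H0 [Hdd _]]]]] _] Hi x. destruct i as [|[|j]]; simpl.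
  - auto.
  - apply H0. lia.
  - apply Hdd. lia.
Qed.

Lemma piL_surj G n P d eps i : RES G n P d eps -> i <= n ->
  forall y, Lpred G P d eps i y -> exists x, piL G P d eps i x = y.
Proof.
  intros [[He [Hd [Hs [H0 [Hdd [Hex _]]]]]] _] Hi y Hy. destruct i; simpl in *.
  - apply Hs.
  - apply Hex; [lia|exact Hy].
Qed.

Definition Lmod G n P d eps i (R : RES G n P d eps) (Hi : i <= n) : ZGmod G :=
  submod (Lcar G P i) (Lpred G P d eps i) (Lpred_submod G n P d eps i R Hi).

Definition piLc G n P d eps i (R : RES G n P d eps) (Hi : i <= n) (x : P i) : Lmod G n P d eps i R Hi :=
  exist _ (piL G P d eps i x) (piL_img G n P d eps i R Hi x).

Lemma piLc_hom G n P d eps i R Hi : is_hom G _ _ (piLc G n P d eps i R Hi).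
Proof.
  destruct (piL_hom G n P d eps i R Hi) as [Ha Hg].
  split; intros; apply sig_eq'; [apply Ha|apply Hg].
Qed.

Lemma piLc_Fsurj G n P d eps i R Hi : Fsurj (piLc G n P d eps i R Hi).
Proof.
  intros H HH. assert (R0 := R). destruct R0 as [R1 [R2 R3]].
  destruct (R2 i Hi H HH) as [r [Ra [Rg [Rk Rf]]]].
  apply sec_of_ret with (r := r); auto.
  - apply piLc_hom.
  - intros [y Hy]. destruct (piL_surj G n P d eps i R Hi y Hy) as [x Hx].
    exists x. apply sig_eq'. exact Hx.
  - split; [|split; [|split]]; auto.
    + intros x. apply sig_eq'. simpl. apply in_ker_piL. auto.
    + intros x Hx. apply Rf. apply in_ker_piL.
      apply (f_equal (@proj1_sig _ _)) in Hx. exact Hx.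
Qed.

Lemma iso_ker_piLc G n P d eps i R Hi Hi' :
  inhabited (iso (kermod (piLc G n P d eps i R Hi) (piLc_hom G n P d eps i R Hi))
                 (Lmod G n P d eps (S i) R Hi')).
Proof.
  constructor. apply iso_sub. intros x. simpl. rewrite in_ker_piL. split.
  - intros E. apply (f_equal (@proj1_sig _ _)) in E. exact E.
  - intros E. apply sig_eq'. exact E.
Qed.

Lemma iso_ker_betac G i : inhabited (iso (kermod (betac G i) (betac_hom G i)) (Qmod G (S i))).
Proof.
  constructor. apply iso_sub. intros x. rewrite Qp_S. split.
  - intros E. apply (f_equal (@proj1_sig _ _)) in E. exact E.
  - intros E. apply sig_eq'. exact E.
Qed.

Lemma schanuel_iter G n P d eps (R : RES G n P d eps) :
  forall i (Hi : i <= n), exists X Y, F_projective G X /\ F_projective G Y /\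
    inhabited (iso (dsum (Qmod G i) X) (dsum (Lmod G n P d eps i R Hi) Y)).
Proof.
  induction i; intros Hi.
  - exists (zmod G), (zmod G). split. apply Fproj_zero. split. apply Fproj_zero.
    constructor. apply iso_dsum; [|apply iso_refl].
    apply iso_sub. intros x. simpl. tauto.
  - assert (Hi0 : i <= n) by lia.
    destruct (IHi Hi0) as [X [Y [PX [PY [psi]]]]].
    set (A := dsum (Bm G (S i)) X). set (A' := dsum (P i) Y).
    set (pi := prodmap X (betac G i)). set (pi' := prodmap Y (piLc G n P d eps i R Hi0)).
    pose (Hpi := prodmap_hom G _ _ X _ (betac_hom G i)).
    pose (Hpi' := prodmap_hom G _ _ Y _ (piLc_hom G n P d eps i R Hi0)).
    assert (PA : F_projective G A) by (apply Fproj_dsum; auto; apply Bm_Fproj).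
    assert (PA' : F_projective G A').
    { apply Fproj_dsum; auto. apply (proj2 (proj2 R)). lia. }
    destruct (schanuel G A A' _ _ pi pi' Hpi Hpi') as [chi]; auto.
    { apply prodmap_Fsurj. apply betac_Fsurj. }
    { apply prodmap_Fsurj. apply piLc_Fsurj. }
    destruct (iso_ker_betac G i) as [k1]. destruct (iso_ker_piLc G n P d eps i R Hi0 Hi) as [k2].
    exists A', A. split; auto. split; auto. constructor.
    assert (e2 : iso (dsum A' (Qmod G (S i))) (dsum A' (kermod pi Hpi))).
    { apply iso_dsum. apply iso_refl. apply iso_sym. exact (iso_trans _ _ _ (iso_ker_prodmap _ _ _ _ _) k1). }
    assert (e4 : iso (dsum A (kermod pi' Hpi')) (dsum A (Lmod G n P d eps (S i) R Hi))).
    { apply iso_dsum. apply iso_refl. exact (iso_trans _ _ _ (iso_ker_prodmap _ _ _ _ _) k2). }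
    exact (iso_trans _ _ _ (iso_swap _ _) (iso_trans _ _ _ e2 (iso_trans _ _ _ (iso_sym _ _ chi)
             (iso_trans _ _ _ e4 (iso_swap _ _))))).
Qed.
(* ===== the Eilenberg swindle (abstract form) ===== *)
Definition NatG (G : Grp) : GSet G.
Proof. refine {| scar := nat; sact := fun _ j => j |}; auto. Defined.

Definition mcomp {G} {X : ZGmod G} (e : X -> X) (x : X) : X := msub x (e x).

Lemma shift_pf G (X : ZGmod G) (e : X -> X) (He : additive e) (y : tens G X (NatG G)) :
  finsupp G X (NatG G) (fun j => madd (e (tval y (S j))) (mcomp e (tval y j))).
Proof.
  destruct y as [y [l Hl]]. exists (map pred l ++ l). intros j Hj. apply in_or_app. simpl in *.
  destruct (classic (y j = mzero)) as [E|E].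
  - left. assert (E' : y (S j) <> mzero).
    { intros E'. apply Hj. unfold mcomp. rewrite E, E', add0, msubxx, madd0; auto. }
    change j with (pred (S j)). apply in_map. apply Hl. exact E'.
  - right. apply Hl. exact E.
Qed.

Definition shiftm {G} {X : ZGmod G} (e : X -> X) (He : additive e) (y : tens G X (NatG G)) : tens G X (NatG G) :=
  exist _ _ (shift_pf G X e He y).

Definition dtopm {G} {B X : ZGmod G} (bet : X -> B) (e : X -> X) (He : additive e) (y : tens G X (NatG G)) :
  dsum B (tens G X (NatG G)) := (bet (tval y 0), shiftm e He y).

Lemma mcomp_add G (X : ZGmod G) (e : X -> X) : additive e -> additive (mcomp e).
Proof. intros He x y. unfold mcomp. rewrite He. apply msub_add. Qed.
Lemma mcomp_act G (X : ZGmod G) (e : X -> X) : (forall g x, e (mact g x) = mact g (e x)) ->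
  forall g x, mcomp e (mact g x) = mact g (mcomp e x).
Proof. intros He g x. unfold mcomp. rewrite He, mact_sub. auto. Qed.

Lemma ec_decomp G (X : ZGmod G) (e : X -> X) x : x = madd (e x) (mcomp e x).
Proof. unfold mcomp. rewrite maddC. symmetry. apply madd_msubK. Qed.

Lemma ec_ext G (X : ZGmod G) (e : X -> X) x y : e x = e y -> mcomp e x = mcomp e y -> x = y.
Proof. intros E1 E2. rewrite (ec_decomp G X e x), (ec_decomp G X e y), E1, E2. auto. Qed.

Lemma e_comp G (X : ZGmod G) (e : X -> X) : additive e -> (forall x, e (e x) = e x) ->
  forall x, e (mcomp e x) = mzero.
Proof. intros Ha Hi x. unfold mcomp. rewrite (addB _ _ _ e Ha), Hi. apply msubxx. Qed.
Lemma comp_e G (X : ZGmod G) (e : X -> X) : (forall x, e (e x) = e x) ->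
  forall x, mcomp e (e x) = mzero.
Proof. intros Hi x. unfold mcomp. rewrite Hi. apply msubxx. Qed.
Lemma comp_comp G (X : ZGmod G) (e : X -> X) : additive e -> (forall x, e (e x) = e x) ->
  forall x, mcomp e (mcomp e x) = mcomp e x.
Proof. intros Ha Hi x. unfold mcomp at 1. rewrite e_comp; auto. apply msub0. Qed.

Lemma swindle G (B X : ZGmod G) (bet : X -> B) (e : X -> X) (He : additive e) (Kp : B -> Prop) :
  is_hom G X B bet -> is_hom G X X e -> (forall x, e (e x) = e x) ->
  (forall x, bet (e x) = bet x) -> (forall x, bet x = mzero -> e x = mzero) ->
  (forall b, Kp b -> exists x, bet x = b /\ e x = x) ->
  is_hom G _ _ (dtopm bet e He) /\
  (forall b z, Kp b -> exists y, dtopm bet e He y = (b, z)) /\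
  (forall y, dtopm bet e He y = mzero -> y = mzero).
Proof.
  intros [Ba Bg] [Ea Eg] Ei Eb Ek Hs.
  assert (Ca := mcomp_add G X e He).
  assert (Cg := mcomp_act G X e Eg).
  assert (EC := e_comp G X e He Ei). assert (CE := comp_e G X e Ei).
  assert (CC := comp_comp G X e He Ei).
  split; [split|split].
  - intros y1 y2. apply dsum_ext; simpl.
    + apply Ba.
    + apply tens_ext. intros j. simpl. rewrite Ea, Ca. rewrite <- !maddA. f_equal.
      rewrite !maddA. f_equal. apply maddC.
  - intros g y. apply dsum_ext; simpl.
    + apply Bg.
    + apply tens_ext. intros j. simpl. rewrite Eg, Cg, mactD. auto.
  - intros b z Kb. destruct (Hs b Kb) as [x [Ex Exe]].
    set (yf := fun j => match j with
                        | 0 => madd x (mcomp e (tval z 0))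
                        | S j' => madd (e (tval z j')) (mcomp e (tval z (S j'))) end).
    assert (pf : finsupp G X (NatG G) yf).
    { destruct z as [z [l Hl]]. exists (0 :: l ++ map S l). intros j Hj.
      destruct j as [|j]; [left; auto|right]. apply in_or_app.
      destruct (classic (z j = mzero)) as [E|E].
      - left. apply Hl. intros E'. apply Hj. unfold yf. simpl. rewrite E, E'.
        rewrite add0, madd0l; auto. unfold mcomp. rewrite add0; auto. apply msubxx.
      - right. apply in_map. apply Hl. exact E. }
    exists (exist _ yf pf). apply dsum_ext.
    + simpl. rewrite Ba, Ex. unfold mcomp. rewrite (addB _ _ _ bet Ba), Eb, msubxx, madd0. auto.
    + apply tens_ext. intros j. simpl.
      assert (Ecx : mcomp e x = mzero) by (unfold mcomp; rewrite Exe; apply msubxx).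
      destruct j as [|j]; simpl.
      * rewrite Ea, Ei, EC, madd0, Ca, Ecx, madd0l, CC. symmetry. apply ec_decomp.
      * rewrite Ea, Ei, EC, madd0, Ca, CE, madd0l, CC. symmetry. apply ec_decomp.
  - intros y Hy.
    assert (H1 : bet (tval y 0) = mzero) by (apply (f_equal fst) in Hy; exact Hy).
    assert (H2 : forall j, madd (e (tval y (S j))) (mcomp e (tval y j)) = mzero).
    { intros j. apply (f_equal snd) in Hy. apply (f_equal (fun f : tens G X (NatG G) => tval f j)) in Hy. exact Hy. }
    apply tens_ext. intros j. change (tval y j = mzero).
    apply (ec_ext G X e); rewrite add0; auto.
    + destruct j as [|j].
      * apply Ek. auto.
      * specialize (H2 j). apply (f_equal e) in H2. rewrite Ea, Ei, EC, madd0, add0 in H2; auto.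
    + specialize (H2 j). apply (f_equal (mcomp e)) in H2. rewrite Ca, CE, madd0l, CC, add0 in H2; auto.
Qed.
Lemma triv_fin G : fin_subgroup G (fun g => g = gone).
Proof.
  split; [|split; [|split]]; auto.
  - intros x y -> ->. apply gmul1l.
  - intros x ->. apply ginv1.
  - exists [gone]. intros x ->. left; auto.
Qed.

Lemma Delta_pt G : inhabited (Delta G).
Proof. destruct (Delta_fixed G _ (triv_fin G)) as [w _]. constructor. exact w. Qed.

Definition Fm (G : Grp) (k : nat) : ZGmod G := tens G (Bm G (S (S k))) (NatG G).
Definition T0 (G : Grp) (k : nat) : ZGmod G := dsum (Bm G (S k)) (Fm G k).

Definition secP (G : Grp) (k : nat) (s : Qmod G (S k) -> Bm G (S (S k))) : Prop :=
  is_hom G _ _ s /\ forall q, betac G (S k) (s q) = q.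

Definition topsec (G : Grp) (k : nat) : Qmod G (S k) -> Bm G (S (S k)) :=
  match excluded_middle_informative (exists s, secP G k s) with
  | left e => proj1_sig (cid e)
  | right _ => fun _ => mzero
  end.

Lemma topsec_add G k : additive (topsec G k).
Proof.
  unfold topsec. destruct (excluded_middle_informative _) as [e|].
  - destruct (proj2_sig (cid e)) as [[Ha _] _]. exact Ha.
  - intros x y. symmetry. apply madd0.
Qed.

Lemma topsec_spec G k : (exists s, secP G k s) -> secP G k (topsec G k).
Proof.
  intros H. unfold topsec. destruct (excluded_middle_informative _) as [e|n].
  - exact (proj2_sig (cid e)).
  - contradiction.
Qed.

Definition ee (G : Grp) (k : nat) (x : Bm G (S (S k))) : Bm G (S (S k)) := topsec G k (betac G (S k) x).

Lemma ee_add G k : additive (ee G k).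
Proof.
  intros x y. unfold ee. rewrite <- topsec_add. f_equal. apply (betac_hom G (S k)).
Qed.

Definition dtop (G : Grp) (k : nat) : Fm G k -> T0 G k := dtopm (beta G (S k)) (ee G k) (ee_add G k).
Definition eps_top (G : Grp) (k : nat) (z : T0 G k) : Bm G k := beta G k (fst z).

Definition topfam (G : Grp) (k : nat) (i : nat) : ZGmod G :=
  match i with 0 => T0 G k | S _ => Fm G k end.
Definition topd (G : Grp) (k : nat) (i : nat) : topfam G k (S i) -> topfam G k i :=
  match i as i0 return topfam G k (S i0) -> topfam G k i0 with
  | 0 => dtop G k
  | S _ => fun _ => mzero
  end.

Definition egen (G : Grp) (M : ZGmod G) (Qm : M -> Prop) (n : nat) (P : nat -> ZGmod G)
  (d : forall i, P (S i) -> P i) (eps : P 0 -> M) : Prop :=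
  is_hom G (P 0) M eps /\ (forall j, j < n -> is_hom G (P (S j)) (P j) (d j)) /\
  (forall x, Qm (eps x)) /\ (forall y, Qm y -> exists x, eps x = y) /\
  (0 < n -> forall y : P 1, eps (d 0 y) = mzero) /\
  (forall j, S (S j) <= n -> forall y : P (S (S j)), d j (d (S j) y) = mzero) /\
  (forall i, i < n -> forall x : P i, in_ker G M P d eps i x -> exists y, d i y = x) /\
  (forall x : P n, in_ker G M P d eps n x -> x = mzero) /\
  F_split G M n P d eps.

Lemma top_swindle G k : (exists s, secP G k s) ->
  is_hom G _ _ (dtop G k) /\
  (forall b z, Qp G (S k) b -> exists y, dtop G k y = (b, z)) /\
  (forall y, dtop G k y = mzero -> y = mzero).
Proof.
  intros Hs. destruct (topsec_spec G k Hs) as [[Sa Sg] Ss].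
  destruct (betac_hom G (S k)) as [Ba Bg].
  assert (Hbs : forall q, beta G (S k) (topsec G k q) = proj1_sig q).
  { intros q. transitivity (proj1_sig (betac G (S k) (topsec G k q))). reflexivity. rewrite Ss. reflexivity. }
  apply (swindle G _ _ (beta G (S k)) (ee G k) (ee_add G k) (Qp G (S k))).
  - apply beta_hom.
  - split; intros; unfold ee; rewrite <- ?Sa, <- ?Sg; f_equal; auto.
  - intros x. unfold ee. rewrite Ss. auto.
  - intros x. unfold ee. rewrite Hbs. auto.
  - intros x Hx. unfold ee. replace (betac G (S k) x) with (@mzero G (Qmod G (S k))).
    + apply add0; auto.
    + apply sig_eq'. simpl. symmetry. exact Hx.
  - intros b Hb. exists (topsec G k (exist _ b Hb)). split.
    + rewrite Hbs. auto.
    + unfold ee. rewrite Ss. auto.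
Qed.

Lemma top_egen G k : (exists s, secP G k s) ->
  egen G (Bm G k) (Qp G k) 1 (topfam G k) (topd G k) (eps_top G k).
Proof.
  intros Hs. destruct (top_swindle G k Hs) as [Dh [Ds Di]].
  destruct (beta_hom G k) as [Ba Bg].
  split; [|split; [|split; [|split; [|split; [|split; [|split; [|split]]]]]]].
  - split; intros; unfold eps_top; [exact (Ba _ _) | exact (Bg _ _)].
  - intros j Hj. assert (j = 0) by lia. subst. exact Dh.
  - intros x. apply beta_Q.
  - intros y Hy. destruct (Delta_pt G) as [w].
    exists ((delta w y, mzero) : T0 G k). unfold eps_top. simpl. apply beta_delta. auto.
  - intros _ y. simpl. unfold eps_top. exact (beta_Q G (S k) _).
  - intros j Hj. lia.
  - intros i Hi x Hx. assert (i = 0) by lia. subst. simpl in *.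
    destruct x as [b z]. destruct (Ds b z Hx) as [y Hy]. exists y. exact Hy.
  - intros x Hx. apply Di. exact Hx.
  - intros i Hi H HH. destruct i as [|[|i]].
    + destruct (proj2 (Qp_Fsplit G (S k)) H HH) as [r [Ra [Rg [Rk Rf]]]].
      exists (fun z => (r (fst z), snd z) : T0 G k). split; [|split; [|split]].
      * intros x y. apply dsum_ext; [exact (Ra _ _) | reflexivity].
      * intros h x Hh. apply dsum_ext; [exact (Rg _ _ Hh) | reflexivity].
      * intros x. exact (Rk (fst x)).
      * intros [b z] Hx. apply dsum_ext; [exact (Rf b Hx) | reflexivity].
    + exists (fun _ => mzero). split; [|split; [|split]].
      * intros x y. symmetry. apply madd0.
      * intros h x _. symmetry. apply mact0.
      * intros x. exact (add0 G _ _ (dtop G k) (hom_additive _ _ _ _ Dh)).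
      * intros x Hx. symmetry. apply Di. exact Hx.
    + lia.
Qed.
Definition consf {G} (A : ZGmod G) (P : nat -> ZGmod G) (i : nat) : ZGmod G :=
  match i with 0 => A | S i' => P i' end.
Definition consd {G} (A : ZGmod G) (P : nat -> ZGmod G) (eps : P 0 -> A) (d : forall i, P (S i) -> P i) :
  forall i, consf A P (S i) -> consf A P i :=
  fun i => match i as i0 return consf A P (S i0) -> consf A P i0 with
           | 0 => eps
           | S i' => d i'
           end.

Lemma in_ker_cons G (M A : ZGmod G) (P : nat -> ZGmod G) d eps (bet : A -> M) i x :
  in_ker G M (consf A P) (consd A P eps d) bet (S i) x <-> in_ker G A P d eps i x.
Proof. destruct i; simpl; tauto. Qed.

Lemma egen_shift G (M A : ZGmod G) (Qm : M -> Prop) (bet : A -> M) n P d eps :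
  is_hom G A M bet -> (forall x, Qm (bet x)) -> (forall y, Qm y -> exists x, bet x = y) ->
  (forall H, fin_subgroup G H -> exists r, Hret (fun x => bet x = mzero) H r) ->
  egen G A (fun x => bet x = mzero) n P d eps ->
  egen G M Qm (S n) (consf A P) (consd A P eps d) bet.
Proof.
  intros Hb HbQ Hbs Hbr [E1 [E2 [E3 [E4 [E5 [E6 [E7 [E8 E9]]]]]]]].
  split; [|split; [|split; [|split; [|split; [|split; [|split; [|split]]]]]]].
  - exact Hb.
  - intros [|j] Hj; simpl. exact E1. apply E2. lia.
  - exact HbQ.
  - exact Hbs.
  - intros _ y. simpl. apply E3.
  - intros [|j] Hj y; simpl.
    + apply E5. lia.
    + apply E6. lia.
  - intros [|i] Hi x Hx.
    + simpl in *. apply E4. exact Hx.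
    + apply (in_ker_cons G M A P d eps bet i x) in Hx. apply E7 in Hx; [|lia].
      destruct Hx as [y Hy]. exists y. exact Hy.
  - intros x Hx. apply E8. apply (in_ker_cons G M A P d eps bet n x). exact Hx.
  - intros [|i] Hi H HH.
    + destruct (Hbr H HH) as [r Hr]. exists r. exact Hr.
    + destruct (E9 i ltac:(lia) H HH) as [r [Ra [Rg [Rk Rf]]]]. exists r.
      split; [|split; [|split]]; auto.
      * intros x. apply (in_ker_cons G M A P d eps bet i). auto.
      * intros x Hx. apply Rf. apply (in_ker_cons G M A P d eps bet i). auto.
Qed.

Fixpoint fam (G : Grp) (k m : nat) : nat -> ZGmod G :=
  match m with
  | 0 => topfam G k
  | S m' => consf (Bm G (S k)) (fam G (S k) m')
  end.

Definition epsf (G : Grp) (k m : nat) : fam G k m 0 -> Bm G k :=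
  match m as m0 return fam G k m0 0 -> Bm G k with
  | 0 => eps_top G k
  | S m' => beta G k
  end.

Fixpoint ddf (G : Grp) (k m : nat) : forall i, fam G k m (S i) -> fam G k m i :=
  match m as m0 return forall i, fam G k m0 (S i) -> fam G k m0 i with
  | 0 => topd G k
  | S m' => consd (Bm G (S k)) (fam G (S k) m') (epsf G (S k) m') (ddf G (S k) m')
  end.

Lemma fam_egen G : forall m k, (exists s, secP G (k + m) s) ->
  egen G (Bm G k) (Qp G k) (S m) (fam G k m) (ddf G k m) (epsf G k m).
Proof.
  induction m; intros k Hs.
  - rewrite Nat.add_0_r in Hs. exact (top_egen G k Hs).
  - apply (egen_shift G (Bm G k) (Bm G (S k)) (Qp G k) (beta G k) (S m) (fam G (S k) m)
             (ddf G (S k) m) (epsf G (S k) m)).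
    + apply beta_hom.
    + apply beta_Q.
    + intros y Hy. destruct (Delta_pt G) as [w]. exists (delta w y). apply beta_delta. auto.
    + apply (proj2 (Qp_Fsplit G (S k))).
    + apply (IHm (S k)). rewrite Nat.add_succ_r in Hs. exact Hs.
Qed.
Definition ptG (G : Grp) : GSet G.
Proof. refine {| scar := unit; sact := fun _ u => u |}; auto. Defined.

Definition prodG {G} (A B : GSet G) : GSet G.
Proof.
  refine {| scar := (scar A * scar B)%type; sact := fun g x => (sact g (fst x), sact g (snd x)) |}.
  - intros [a b]. simpl. rewrite !sact1. auto.
  - intros g h [a b]. simpl. rewrite !sactM. auto.
Defined.

Definition dunionG {G} (A B : GSet G) : GSet G.
Proof.
  refine {| scar := (scar A + scar B)%type;
            sact := fun g x => match x with inl a => inl (sact g a) | inr b => inr (sact g b) end |}.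
  - intros [a|b]; rewrite sact1; auto.
  - intros g h [a|b]; rewrite sactM; auto.
Defined.

Fixpoint Dpow (G : Grp) (j : nat) : GSet G :=
  match j with 0 => ptG G | S j' => prodG (Dpow G j') (Delta G) end.

Lemma triv_iso_pf G (z : trivZ G) : finsupp G (trivZ G) (ptG G) (fun _ => z).
Proof. exists [tt]. intros [] _. left; auto. Qed.

Definition triv_iso (G : Grp) : iso (trivZ G) (perm_mod G (ptG G)).
Proof.
  refine (mk_iso (trivZ G) (perm_mod G (ptG G)) (fun z => exist _ _ (triv_iso_pf G z) : perm_mod G (ptG G))
                 (fun f : perm_mod G (ptG G) => tval f tt) _).
  split; [split|split; [split|split]]; intros; try (apply tens_ext; intros []; reflexivity); try reflexivity.
Defined.

Lemma tmap_pf G (M N : ZGmod G) (O : GSet G) (f : M -> N) (Hf : f mzero = mzero) (x : tens G M O) :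
  finsupp G N O (fun w => f (tval x w)).
Proof.
  destruct x as [x [l H]]. exists l. intros w Hw. apply H. intros E. apply Hw. simpl. rewrite E. auto.
Qed.

Definition tmap {G} {M N : ZGmod G} (O : GSet G) (f : M -> N) (Hf : f mzero = mzero) (x : tens G M O) : tens G N O :=
  exist _ _ (tmap_pf G M N O f Hf x).

Lemma tmap_hom G (M N : ZGmod G) (O : GSet G) f Hf : is_hom G M N f -> is_hom G _ _ (@tmap G M N O f Hf).
Proof.
  intros [Ha Hg]. split; intros; apply tens_ext; intros w; simpl; auto.
Qed.

Definition tens_iso {G} (M N : ZGmod G) (O : GSet G) (i : iso M N) : iso (tens G M O) (tens G N O).
Proof.
  refine (mk_iso (tens G M O) (tens G N O)
            (tmap O (isof i) (add0 G M N _ (hom_additive _ _ _ _ (isof_hom G M N i))))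
            (tmap O (isog i) (add0 G N M _ (hom_additive _ _ _ _ (isog_hom G M N i)))) _).
  split. apply tmap_hom. apply isof_hom. split. apply tmap_hom. apply isog_hom.
  split; intros; apply tens_ext; intros w; simpl; [apply isogf|apply isofg].
Defined.

Lemma curry_pf G (A O : GSet G) (F : tens G (perm_mod G A) O) :
  finsupp G (trivZ G) (prodG A O) (fun p => tval (tval F (snd p)) (fst p)).
Proof.
  destruct F as [F [lO HO]]. simpl.
  assert (K : forall l : list O, exists L, forall o a, In o l -> tval (F o) a <> mzero -> In (a, o) L).
  { induction l as [|o l IH].
    - exists []. intros o a [].
    - destruct IH as [L HL]. destruct (F o) as [fo [la Hla]] eqn:Eo.
      exists (map (fun a => (a, o)) la ++ L). intros o' a [E|I] Ha; apply in_or_app.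
      + subst o'. left. rewrite Eo in Ha. simpl in Ha. apply (in_map (fun a => (a, o))). apply Hla. exact Ha.
      + right. auto. }
  destruct (K lO) as [L HL]. exists L. intros [a o] H. simpl in *. apply HL; auto.
  apply HO. intros E. apply H. rewrite E. reflexivity.
Qed.

Lemma uncurry_pf1 G (A O : GSet G) (g : perm_mod G (prodG A O)) (o : O) :
  finsupp G (trivZ G) A (fun a => tval g ((a, o) : prodG A O)).
Proof.
  destruct g as [g [L HL]]. exists (map fst L). intros a Ha. simpl in *.
  apply (in_map fst L (a, o)). apply HL. exact Ha.
Qed.

Lemma uncurry_pf2 G (A O : GSet G) (g : perm_mod G (prodG A O)) :
  finsupp G (perm_mod G A) O (fun o => exist _ _ (uncurry_pf1 G A O g o)).
Proof.
  destruct g as [g0 [L HL]] eqn:Eg. exists (map snd L). intros o Ho.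
  destruct (classic (exists a, g0 (a, o) <> mzero)) as [[a Ha]|Hn].
  - apply (in_map snd L (a, o)). apply HL. exact Ha.
  - exfalso. apply Ho. apply tens_ext. intros a. simpl.
    destruct (classic (g0 (a, o) = mzero)) as [E|E]; auto. exfalso. apply Hn. exists a. auto.
Qed.

Definition curry_iso {G} (A O : GSet G) : iso (tens G (perm_mod G A) O) (perm_mod G (prodG A O)).
Proof.
  refine (mk_iso (tens G (perm_mod G A) O) (perm_mod G (prodG A O))
            (fun F => exist _ _ (curry_pf G A O F) : perm_mod G (prodG A O))
            (fun g => exist _ _ (uncurry_pf2 G A O g) : tens G (perm_mod G A) O) _).
  split; [split|split; [split|split]]; intros; try (apply tens_ext; intros [a o]; reflexivity).
  - apply tens_ext; intros o; apply tens_ext; intros a; reflexivity.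
  - apply tens_ext; intros o; apply tens_ext; intros a; reflexivity.
  - apply tens_ext; intros o; apply tens_ext; intros a; reflexivity.
Defined.

Lemma union_pf G (A B : GSet G) (f : perm_mod G A) (g : perm_mod G B) :
  finsupp G (trivZ G) (dunionG A B)
    (fun x : dunionG A B => match x with inl a => tval f a | inr b => tval g b end).
Proof.
  destruct f as [f [l1 H1]], g as [g [l2 H2]]. exists (map inl l1 ++ map inr l2).
  intros [a|b] H; apply in_or_app; [left|right]; apply in_map; simpl in *; auto.
Qed.
Lemma unionl_pf G (A B : GSet G) (h : perm_mod G (dunionG A B)) :
  finsupp G (trivZ G) A (fun a => tval h (inl a : dunionG A B)).
Proof.
  destruct h as [h [l H]]. exists (flat_map (fun x : dunionG A B => match x with inl a => [a] | inr _ => [] end) l).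
  intros a Ha. apply in_flat_map. exists (inl a). split. apply H. exact Ha. left; auto.
Qed.
Lemma unionr_pf G (A B : GSet G) (h : perm_mod G (dunionG A B)) :
  finsupp G (trivZ G) B (fun b => tval h (inr b : dunionG A B)).
Proof.
  destruct h as [h [l H]]. exists (flat_map (fun x : dunionG A B => match x with inl _ => [] | inr b => [b] end) l).
  intros b Hb. apply in_flat_map. exists (inr b). split. apply H. exact Hb. left; auto.
Qed.

Definition union_iso {G} (A B : GSet G) : iso (dsum (perm_mod G A) (perm_mod G B)) (perm_mod G (dunionG A B)).
Proof.
  refine (mk_iso (dsum (perm_mod G A) (perm_mod G B)) (perm_mod G (dunionG A B))
            (fun x => exist _ _ (union_pf G A B (fst x) (snd x)) : perm_mod G (dunionG A B))
            (fun h => (exist _ _ (unionl_pf G A B h), exist _ _ (unionr_pf G A B h))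
                      : dsum (perm_mod G A) (perm_mod G B)) _).
  split; [split|split; [split|split]]; intros.
  - apply tens_ext; intros [a|b]; reflexivity.
  - apply tens_ext; intros [a|b]; reflexivity.
  - apply dsum_ext; apply tens_ext; intros a; reflexivity.
  - apply dsum_ext; apply tens_ext; intros a; reflexivity.
  - apply dsum_ext; apply tens_ext; intros a; reflexivity.
  - apply tens_ext; intros [a|b]; reflexivity.
Defined.

Fixpoint Bm_iso (G : Grp) (j : nat) : iso (Bm G j) (perm_mod G (Dpow G j)) :=
  match j as j0 return iso (Bm G j0) (perm_mod G (Dpow G j0)) with
  | 0 => triv_iso G
  | S j' => iso_trans _ _ _ (tens_iso _ _ (Delta G) (Bm_iso G j')) (curry_iso (Dpow G j') (Delta G))
  end.
Definition consO {G} (A : GSet G) (F : nat -> GSet G) (i : nat) : GSet G :=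
  match i with 0 => A | S i' => F i' end.
Definition topOm (G : Grp) (k i : nat) : GSet G :=
  match i with
  | 0 => dunionG (Dpow G (S k)) (prodG (Dpow G (S (S k))) (NatG G))
  | S _ => prodG (Dpow G (S (S k))) (NatG G)
  end.
Fixpoint Om (G : Grp) (k m : nat) : nat -> GSet G :=
  match m with
  | 0 => topOm G k
  | S m' => consO (Dpow G (S k)) (Om G (S k) m')
  end.

Definition Fm_iso (G : Grp) (k : nat) : iso (Fm G k) (perm_mod G (prodG (Dpow G (S (S k))) (NatG G))) :=
  iso_trans (Fm G k) (tens G (perm_mod G (Dpow G (S (S k)))) (NatG G)) _
    (tens_iso (Bm G (S (S k))) (perm_mod G (Dpow G (S (S k)))) (NatG G) (Bm_iso G (S (S k)))) (curry_iso (Dpow G (S (S k))) (NatG G)).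
Definition T0_iso (G : Grp) (k : nat) : iso (T0 G k) (perm_mod G (topOm G k 0)) :=
  iso_trans (T0 G k) (dsum (perm_mod G (Dpow G (S k))) (perm_mod G (prodG (Dpow G (S (S k))) (NatG G)))) _
    (iso_dsum _ _ _ _ (Bm_iso G (S k)) (Fm_iso G k))
    (union_iso (Dpow G (S k)) (prodG (Dpow G (S (S k))) (NatG G))).

Fixpoint fam_iso (G : Grp) (k m : nat) : forall i, iso (fam G k m i) (perm_mod G (Om G k m i)) :=
  match m as m0 return forall i, iso (fam G k m0 i) (perm_mod G (Om G k m0 i)) with
  | 0 => fun i => match i as i0 return iso (topfam G k i0) (perm_mod G (topOm G k i0)) with
                  | 0 => T0_iso G k
                  | S _ => Fm_iso G k
                  end
  | S m' => fun i => match i as i0 return iso (consf (Bm G (S k)) (fam G (S k) m') i0)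
                                             (perm_mod G (consO (Dpow G (S k)) (Om G (S k) m') i0)) with
                     | 0 => Bm_iso G (S k)
                     | S i' => fam_iso G (S k) m' i'
                     end
  end.

Lemma fs_Delta G : finite_stabilisers G (Delta G).
Proof.
  intros w. destruct (Delta_stab_fin G w) as [_ [_ [_ [l Hl]]]]. exists l. exact Hl.
Qed.
Lemma fs_prod_r G (A B : GSet G) : finite_stabilisers G B -> finite_stabilisers G (prodG A B).
Proof.
  intros H [a b]. destruct (H b) as [l Hl]. exists l. intros g E. apply Hl.
  apply (f_equal snd) in E. exact E.
Qed.
Lemma fs_prod_l G (A B : GSet G) : finite_stabilisers G A -> finite_stabilisers G (prodG A B).
Proof.
  intros H [a b]. destruct (H a) as [l Hl]. exists l. intros g E. apply Hl.
  apply (f_equal fst) in E. exact E.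
Qed.
Lemma fs_union G (A B : GSet G) : finite_stabilisers G A -> finite_stabilisers G B ->
  finite_stabilisers G (dunionG A B).
Proof.
  intros HA HB [a|b].
  - destruct (HA a) as [l Hl]. exists l. intros g E. apply Hl. simpl in E. injection E. auto.
  - destruct (HB b) as [l Hl]. exists l. intros g E. apply Hl. simpl in E. injection E. auto.
Qed.
Lemma fs_Dpow G j : finite_stabilisers G (Dpow G (S j)).
Proof. apply fs_prod_r. apply fs_Delta. Qed.

Lemma fs_Om G : forall m k i, finite_stabilisers G (Om G k m i).
Proof.
  induction m; intros k i.
  - destruct i.
    + exact (fs_union G _ _ (fs_Dpow G k) (fs_prod_l G _ _ (fs_Dpow G (S k)))).
    + exact (fs_prod_l G _ _ (fs_Dpow G (S k))).
  - destruct i.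
    + exact (fs_Dpow G k).
    + exact (IHm (S k) i).
Qed.

Lemma transport G n (P Q : nat -> ZGmod G) (d : forall i, P (S i) -> P i) (eps : P 0 -> trivZ G)
  (phi : forall i, iso (P i) (Q i)) :
  exact_resolution G (trivZ G) n P d eps -> F_split G (trivZ G) n P d eps ->
  exact_resolution G (trivZ G) n Q (fun i y => isof (phi i) (d i (isog (phi (S i)) y)))
    (fun y => eps (isog (phi 0) y)) /\
  F_split G (trivZ G) n Q (fun i y => isof (phi i) (d i (isog (phi (S i)) y)))
    (fun y => eps (isog (phi 0) y)).
Proof.
  intros [E1 [E2 [E3 [E4 [E5 [E6 E7]]]]]] FS.
  set (d' := fun i (y : Q (S i)) => isof (phi i) (d i (isog (phi (S i)) y))).
  set (eps' := fun y => eps (isog (phi 0) y)).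
  assert (Hk : forall i y, in_ker G (trivZ G) Q d' eps' i y <-> in_ker G (trivZ G) P d eps i (isog (phi i) y)).
  { intros [|i] y; simpl. tauto. unfold d'. split.
    - intros H. rewrite <- (isogf G _ _ (phi i) (d i _)), H.
      apply add0. apply hom_additive. apply isog_hom.
    - intros H. rewrite H. apply add0. apply hom_additive. apply isof_hom. }
  split; [split; [|split; [|split; [|split; [|split; [|split]]]]]|].
  - exact (is_hom_comp G _ (P 0) _ (isog (phi 0)) eps (isog_hom G _ _ (phi 0)) E1).
  - intros j Hj. exact (is_hom_comp G _ _ _ (isog (phi (S j))) (fun x => isof (phi j) (d j x))
      (isog_hom G _ _ (phi (S j))) (is_hom_comp G _ _ _ (d j) (isof (phi j)) (E2 j Hj) (isof_hom G _ _ (phi j)))).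
  - intros m. destruct (E3 m) as [x Hx]. exists (isof (phi 0) x). unfold eps'. rewrite isogf. auto.
  - intros Hn y. unfold eps', d'. rewrite isogf. auto.
  - intros j Hj y. unfold d'. rewrite isogf, E5; auto. apply add0. apply hom_additive. apply isof_hom.
  - intros i Hi x Hx. apply Hk in Hx. destruct (E6 i Hi _ Hx) as [y Hy].
    exists (isof (phi (S i)) y). unfold d'. rewrite isogf, Hy, isofg. auto.
  - intros x Hx. apply Hk in Hx. apply E7 in Hx. rewrite <- (isofg G _ _ (phi n) x), Hx.
    apply add0. apply hom_additive. apply isof_hom.
  - intros i Hi H HH. destruct (FS i Hi H HH) as [r [Ra [Rg [Rk Rf]]]].
    exists (fun y => isof (phi i) (r (isog (phi i) y))).
    destruct (isof_hom G _ _ (phi i)) as [Fa Fg]. destruct (isog_hom G _ _ (phi i)) as [Ga Gg].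
    split; [|split; [|split]].
    + intros x y. rewrite Ga, Ra, Fa. auto.
    + intros h x Hh. rewrite Gg, Rg, Fg; auto.
    + intros x. apply Hk. rewrite isogf. apply Rk.
    + intros x Hx. apply Hk in Hx. rewrite Rf; auto. apply isofg.
Qed.
Lemma bij_iso G (M N : ZGmod G) (f : M -> N) : is_hom G M N f -> (forall x, f x = mzero -> x = mzero) ->
  (forall y, exists x, f x = y) -> inhabited (iso M N).
Proof.
  intros [Fa Fg] Hi Hs.
  assert (Inj : forall x x', f x = f x' -> x = x').
  { intros x x' E. apply msub_eq0. apply Hi. rewrite (addB _ _ _ f Fa), E. apply msubxx. }
  set (g := fun y => proj1_sig (cid (Hs y))).
  assert (Hg : forall y, f (g y) = y) by (intros y; exact (proj2_sig (cid (Hs y)))).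
  constructor. refine (mk_iso M N f g _).
  split; [split; auto|split; [split|split]].
  - intros x y. apply Inj. rewrite Fa, !Hg. auto.
  - intros h x. apply Inj. rewrite Fg, !Hg. auto.
  - intros x. apply Inj. rewrite Hg. auto.
  - exact Hg.
Qed.

Lemma Fproj_dsum_l G (A B : ZGmod G) : F_projective G (dsum A B) -> F_projective G A.
Proof.
  intros H. apply (Fproj_retract G (dsum A B) A (fun a => (a, mzero) : dsum A B) fst H).
  - split; intros; apply dsum_ext; simpl; auto. symmetry; apply madd0. symmetry; apply mact0.
  - split; intros; reflexivity.
  - intros; reflexivity.
Qed.

Lemma Q_Fproj G m P d eps : RES G (S m) P d eps -> F_projective G (Qmod G (S m)).
Proof.
  intros R. assert (R0 := R). destruct R0 as [[E1 [E2 [E3 [E4 [E5 [E6 E7]]]]]] [FS FP]].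
  destruct (schanuel_iter G (S m) P d eps R (S m) (le_n _)) as [X [Y [PX [PY [psi]]]]].
  assert (HL : F_projective G (Lmod G (S m) P d eps (S m) R (le_n _))).
  { destruct (bij_iso G _ _ (piLc G (S m) P d eps (S m) R (le_n _))) as [i].
    - apply piLc_hom.
    - intros x Hx. apply E7. apply in_ker_piL. apply (f_equal (@proj1_sig _ _)) in Hx. exact Hx.
    - apply Fsurj_surj. apply piLc_Fsurj.
    - apply (Fproj_iso G _ _ i). apply FP. auto. }
  apply (Fproj_dsum_l G _ X). apply (Fproj_iso G _ _ (iso_sym _ _ psi)). apply Fproj_dsum; auto.
Qed.

Lemma G_finite G P d eps : RES G 0 P d eps -> exists lG : list G, forall g, In g lG.
Proof.
  intros [[E1 [E2 [E3 [E4 [E5 [E6 E7]]]]]] [FS FP]].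
  destruct (E3 1%Z) as [x0 Hx0].
  assert (Fix : forall g, mact g x0 = x0).
  { intros g. apply msub_eq0. apply E7. simpl. destruct E1 as [Ea Eg].
    rewrite (addB _ _ _ eps Ea), Eg. exact (msubxx G _ (eps x0)). }
  destruct (FP 0 (le_n _)) as [N [s [p [[Sa Sg] [[Pa Pg] Ps]]]]].
  set (f := s x0).
  assert (Ff : forall g, mact g f = f) by (intros g; unfold f; rewrite <- Sg, Fix; auto).
  assert (Hf : f <> mzero).
  { intros E. assert (x0 = mzero).
    { rewrite <- (Ps x0). change (p f = mzero). rewrite E. apply add0. intros a b; apply Pa. }
    rewrite H, (add0 G _ _ eps) in Hx0. discriminate. exact (hom_additive _ _ _ _ E1). }
  assert (Hw : exists w, tval f w <> mzero).
  { apply NNPP. intros Hn. apply Hf. apply tens_ext. intros w.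
    destruct (classic (tval f w = mzero)) as [E|E]; auto. exfalso. apply Hn. exists w. auto. }
  destruct Hw as [w Hw]. destruct (tens_cover G _ _ f) as [l [_ Hl]].
  assert (Orb : forall g, In (sact g w) l).
  { intros g. apply Hl. rewrite <- (Ff g). rewrite tval_act, sactK. intros E.
    apply Hw. apply (mact_inj G _ g). rewrite E. symmetry. apply mact0. }
  destruct (Delta_stab_fin G w) as [_ [_ [_ [lS HS]]]].
  set (pick := fun u : Delta G => match excluded_middle_informative (exists g, sact g w = u) with
                                  | left e => proj1_sig (cid e) | right _ => gone end).
  exists (flat_map (fun u => map (gmul (pick u)) lS) l).
  intros g. apply in_flat_map. exists (sact g w). split; auto.
  assert (Hp : sact (pick (sact g w)) w = sact g w).
  { unfold pick. destruct (excluded_middle_informative _) as [e|n].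
    - exact (proj2_sig (cid e)).
    - exfalso. apply n. exists g. auto. }
  set (h := pick (sact g w)) in *.
  replace g with (gmul h (gmul (ginv h) g)) by apply gKr.
  apply in_map. apply HS. unfold stab. rewrite sactM, <- Hp, sactK. auto.
Qed.

Theorem mainTheorem2 (G : Grp) (n : nat) (Hcd : Fcd_eq G n) :
  exists (Omega : nat -> GSet G)
         (d : forall i, perm_mod G (Omega (S i)) -> perm_mod G (Omega i))
         (eps : perm_mod G (Omega 0) -> trivZ G),
    (forall i, i <= n -> finite_stabilisers G (Omega i)) /\
    exact_resolution G (trivZ G) n (fun i => perm_mod G (Omega i)) d eps /\
    F_split G (trivZ G) n (fun i => perm_mod G (Omega i)) d eps.
Proof.
  destruct Hcd as [[P [d [eps [HR [HF HP]]]]] _].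
  assert (R : RES G n P d eps) by (split; auto).
  destruct n as [|m].
  - destruct (G_finite G P d eps R) as [lG HlG].
    exists (fun _ => ptG G), (fun _ _ => mzero), (isog (triv_iso G)).
    split; [|split; [split; [|split; [|split; [|split; [|split; [|split]]]]]|]].
    + intros i _ w. exists lG. intros g _. auto.
    + apply isog_hom.
    + intros j Hj. lia.
    + intros z. exists (isof (triv_iso G) z). apply isogf.
    + intros Hn. lia.
    + intros j Hj. lia.
    + intros i Hi. lia.
    + intros x Hx. simpl in Hx. rewrite <- (isofg G _ _ (triv_iso G) x), Hx. apply tens_ext; intros []; reflexivity.
    + intros i Hi H HH. assert (i = 0) by lia. subst.
      exists (fun _ => mzero). split; [|split; [|split]].
      * intros x y. symmetry. apply madd0.
      * intros h x _. symmetry. apply mact0.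
      * intros x. reflexivity.
      * intros x Hx. simpl in Hx. rewrite <- (isofg G _ _ (triv_iso G) x), Hx. apply tens_ext; intros []; reflexivity.
  - assert (HQ := Q_Fproj G m P d eps R).
    destruct (lifting G (Qmod G (S m)) (Bm G (S (S m))) (Qmod G (S m)) (betac G (S m)) (fun q => q))
      as [s [Hs Es]]; auto.
    { apply betac_hom. }
    { apply betac_Fsurj. }
    { apply is_hom_id. }
    assert (Sec : exists s, secP G (0 + m) s) by (exists s; split; auto).
    destruct (fam_egen G m 0 Sec) as [E1 [E2 [E3 [E4 [E5 [E6 [E7 [E8 E9]]]]]]]].
    assert (ER : exact_resolution G (trivZ G) (S m) (fam G 0 m) (ddf G 0 m) (epsf G 0 m)).
    { split; [exact E1|split; [exact E2|split; [|split; [exact E5|split; [exact E6|split; [exact E7|exact E8]]]]]].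
      intros z. apply E4. exact I. }
    destruct (transport G (S m) (fam G 0 m) (fun i => perm_mod G (Om G 0 m i)) (ddf G 0 m) (epsf G 0 m)
                (fam_iso G 0 m) ER E9) as [T1 T2].
    exists (Om G 0 m), (fun i y => isof (fam_iso G 0 m i) (ddf G 0 m i (isog (fam_iso G 0 m (S i)) y))),
      (fun y => epsf G 0 m (isog (fam_iso G 0 m 0) y)).
    split; [|split; [exact T1|exact T2]].
    intros i _. apply fs_Om.
Qed.
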